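(* Every total 3-order on a five-element set $V$ is realizable by a holey family: for every total 3-order $o$ on $V$, there exist compact convex sets $K_v$ ($v\in V$) in the plane forming a holey family such that $o(K_uK_vK_w)=o(uvw)$ for all distinct $u,v,w\in V$.
   Context: A total orientation on a set $V$ is a map $o$ from ordered triples of distinct elements of $V$ to $\{+1,-1\}$ with $o(uvw)=o(wuv)=o(vwu)=-o(uwv)=-o(vuw)=-o(wvu)$. It is a total 3-order if it satisfies the interiority condition: for all distinct $a,b,c,d$, $o(abd)=o(bcd)=o(cad)=1$ implies $o(abc)=1$. A family of compact convex sets in the plane is holey if any two members intersect and no three distinct members have a common point. For three members $A,B,C$ of a holey family, $o(ABC)=o(xyz)$ for any $x\in B\cap C$, $y\in A\cap C$, $z\in A\cap B$, where $o(xyz)=+1$ for a counterclockwise and $-1$ for a clockwise triangle (independent of the choice). *)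

(* Defs.v *)
From HB Require Import structures.
From mathcomp Require Import all_boot all_order all_algebra.
From mathcomp Require Import all_classical all_reals topology normedtype.
Set Implicit Arguments. Unset Strict Implicit. Unset Printing Implicit Defensive.
Import numFieldNormedType.Exports.
Import Order.TTheory GRing.Theory Num.Theory.
Local Open Scope ring_scope.
Local Open Scope classical_set_scope.

Definition distinct3 (V : eqType) (u v w : V) : Prop :=
  [/\ u != v, v != w & u != w].

(* A total orientation on V: values +1/-1 on ordered triples of distinct
   elements, with o(uvw)=o(wuv)=o(vwu)=-o(uwv)=-o(vuw)=-o(wvu).
   Values on non-distinct triples are irrelevant. *)
Definition total_orientation (V : eqType) (o : V -> V -> V -> int) : Prop :=
  forall u v w, distinct3 u v w ->
    (o u v w = 1 \/ o u v w = -1) /\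
    [/\ o u v w = o w u v, o u v w = o v w u,
        o u v w = - o u w v, o u v w = - o v u w & o u v w = - o w v u].

Definition total_3order (V : eqType) (o : V -> V -> V -> int) : Prop :=
  total_orientation o /\
  forall a b c d, distinct3 a b c -> a != d -> b != d -> c != d ->
    o a b d = 1 -> o b c d = 1 -> o c a d = 1 -> o a b c = 1.

Definition convex_plane (R : realType) (K : set (R * R)) : Prop :=
  forall x y, K x -> K y -> forall t : R, 0 <= t <= 1 ->
    K ((1 - t) * x.1 + t * y.1, (1 - t) * x.2 + t * y.2).

(* Orientation of the triangle xyz: +1 counterclockwise, -1 clockwise
   (0 if degenerate). *)
Definition orient (R : realType) (x y z : R * R) : int :=
  sgz ((y.1 - x.1) * (z.2 - x.2) - (y.2 - x.2) * (z.1 - x.1)).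

Definition holey (R : realType) (V : eqType) (K : V -> set (R * R)) : Prop :=
  [/\ forall v, compact (K v) /\ convex_plane (K v),
      forall u v, u != v -> K u `&` K v !=set0 &
      forall u v w, distinct3 u v w -> K u `&` K v `&` K w = set0].

(* o(K_u K_v K_w) = s: the orientation of x y z, for x in K_v & K_w,
   y in K_u & K_w, z in K_u & K_v (independent of the choice). *)
Definition family_orient_is (R : realType) (A B C : set (R * R)) (s : int) : Prop :=
  forall x y z, (B `&` C) x -> (A `&` C) y -> (A `&` B) z -> orient x y z = s.

(* Main.v *)
Require Import Defs.
From HB Require Import structures.
From mathcomp Require Import all_boot all_order all_algebra.
From mathcomp Require Import all_classical all_reals topology normedtype.
From mathcomp Require Import ssrZ zify.
From Stdlib Require Import ZArith.
From mathcomp Require Import ring lra.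
Import numFieldNormedType.Exports.
Import Order.TTheory GRing.Theory Num.Theory.
Local Open Scope ring_scope.
Local Open Scope classical_set_scope.
Set Implicit Arguments. Unset Strict Implicit. Unset Printing Implicit Defensive.
Delimit Scope nat_scope with N.
Definition tri : seq (nat * nat * nat) :=
  [:: (0,1,2); (0,1,3); (0,1,4); (0,2,3); (0,2,4); (0,3,4); (1,2,3); (1,2,4); (1,3,4); (2,3,4)]%nat.

Definition sort3 (a b c : nat) : (nat * nat * nat) * bool :=
  if (a < b)%nat then
    if (b < c)%nat then ((a,b,c), false)
    else if (a < c)%nat then ((a,c,b), true) else ((c,a,b), false)
  else if (a < c)%nat then ((b,a,c), true)
  else if (b < c)%nat then ((b,c,a), false) else ((c,b,a), true).

Definition signb (bs : seq bool) (a b c : nat) : bool :=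
  xorb (sort3 a b c).2 (nth false bs (index (sort3 a b c).1 tri)).

Definition ext (bs : seq bool) (a b c : nat) : int := if signb bs a b c then 1 else -1.

Definition quads : seq (nat * nat * nat * nat) :=
  [seq q <- [seq (x.1.1, x.1.2, x.2.1, x.2.2) | x <- [seq (p, r) | p <- [seq (a, b) | a <- iota 0 5, b <- iota 0 5],
        r <- [seq (c, d) | c <- iota 0 5, d <- iota 0 5]]]
   | let: (a, b, c, d) := q in [&& a != b, a != c, a != d, b != c, b != d & c != d]].

Definition trips : seq (nat * nat * nat) :=
  [seq q <- [seq (p.1, p.2, c) | p <- [seq (a, b) | a <- iota 0 5, b <- iota 0 5], c <- iota 0 5]
   | let: (a, b, c) := q in [&& a != b, a != c & b != c]].

Definition validb (bs : seq bool) : bool :=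
  all (fun q => let: (a, b, c, d) := q in
     (signb bs a b d && signb bs b c d && signb bs c a d) ==> signb bs a b c) quads.

Fixpoint allb (n : nat) : seq (seq bool) :=
  if n is n'.+1 then [seq b :: s | b <- [:: true; false], s <- allb n'] else [:: [::]].

Lemma mem_allb n s : size s = n -> s \in allb n.
Proof.
elim: n s => [|n IH] [|b s] // H.
have Hs : size s = n by case: H.
apply/allpairsP; exists (b, s) => /=; split => //; [by case: (b) | exact: IH].
Qed.
Definition repbits (c : nat) : seq bool := nth [::] [:: [:: false; false; false; false; false; false; false; false; false; false]; [:: false; false; false; false; false; false; false; false; false; true]; [:: false; false; false; false; false; false; false; false; true; false]; [:: false; false; false; false; false; false; false; true; true; false]; [:: false; false; false; false; false; false; false; true; true; true]; [:: false; false; false; false; false; false; true; false; true; true]] c.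
Definition table : seq (nat * seq nat) := [:: (0, [:: 0; 1; 2; 3; 4]);
 (1, [:: 2; 3; 4; 0; 1]);
 (2, [:: 3; 4; 0; 1; 2]);
 (1, [:: 4; 3; 0; 1; 2]);
 (1, [:: 3; 4; 0; 1; 2]);
 (2, [:: 4; 3; 0; 1; 2]);
 (1, [:: 3; 2; 4; 0; 1]);
 (0, [:: 0; 4; 1; 2; 3]);
 (2, [:: 1; 2; 3; 4; 0]);
 (0, [:: 0; 1; 2; 3; 4]);
 (3, [:: 0; 2; 3; 1; 4]);
 (4, [:: 4; 2; 3; 0; 1]);
 (5, [:: 3; 0; 1; 2; 4]);
 (0, [:: 0; 1; 2; 3; 4]);
 (2, [:: 4; 2; 3; 0; 1]);
 (1, [:: 2; 1; 3; 4; 0]);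
 (2, [:: 4; 0; 1; 2; 3]);
 (0, [:: 0; 1; 2; 3; 4]);
 (5, [:: 3; 2; 4; 0; 1]);
 (0, [:: 0; 1; 2; 3; 4]);
 (1, [:: 3; 0; 1; 2; 4]);
 (5, [:: 3; 1; 2; 4; 0]);
 (1, [:: 3; 1; 2; 4; 0]);
 (2, [:: 3; 2; 4; 0; 1]);
 (3, [:: 0; 1; 4; 2; 3]);
 (0, [:: 0; 1; 2; 3; 4]);
 (2, [:: 1; 4; 0; 2; 3]);
 (0, [:: 0; 1; 2; 3; 4]);
 (2, [:: 3; 1; 2; 4; 0]);
 (0, [:: 0; 1; 2; 3; 4]);
 (0, [:: 0; 3; 4; 1; 2]);
 (1, [:: 4; 2; 3; 0; 1]);
 (1, [:: 4; 0; 1; 2; 3]);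
 (4, [:: 4; 3; 0; 1; 2]);
 (0, [:: 0; 1; 2; 3; 4]);
 (0, [:: 0; 1; 2; 3; 4]);
 (2, [:: 3; 0; 1; 2; 4]);
 (3, [:: 0; 3; 1; 4; 2]);
 (5, [:: 3; 4; 0; 1; 2]);
 (2, [:: 1; 0; 2; 3; 4]);
 (0, [:: 0; 1; 2; 3; 4]);
 (0, [:: 0; 1; 2; 3; 4]);
 (0, [:: 0; 1; 2; 3; 4]);
 (0, [:: 0; 1; 2; 3; 4]);
 (0, [:: 0; 1; 2; 3; 4]);
 (0, [:: 0; 1; 2; 3; 4]);
 (0, [:: 0; 1; 2; 3; 4]);
 (0, [:: 0; 1; 2; 3; 4]);
 (1, [:: 2; 4; 0; 1; 3]);
 (0, [:: 0; 1; 2; 3; 4]);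
 (0, [:: 0; 1; 2; 3; 4]);
 (0, [:: 0; 1; 2; 3; 4]);
 (0, [:: 0; 2; 3; 4; 1]);
 (2, [:: 1; 3; 4; 0; 2]);
 (2, [:: 4; 1; 2; 3; 0]);
 (3, [:: 0; 4; 2; 3; 1]);
 (4, [:: 4; 0; 1; 2; 3]);
 (0, [:: 0; 1; 2; 3; 4]);
 (0, [:: 0; 1; 2; 3; 4]);
 (0, [:: 0; 1; 2; 3; 4]);
 (1, [:: 4; 1; 2; 3; 0]);
 (0, [:: 0; 1; 2; 3; 4]);
 (1, [:: 2; 0; 1; 3; 4]);
 (4, [:: 4; 1; 2; 3; 0]);
 (1, [:: 1; 2; 3; 4; 0]);
 (2, [:: 2; 4; 3; 0; 1]);
 (0, [:: 0; 1; 2; 3; 4]);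
 (5, [:: 0; 3; 1; 2; 4]);
 (4, [:: 2; 4; 3; 0; 1]);
 (3, [:: 2; 0; 3; 1; 4]);
 (0, [:: 0; 1; 2; 3; 4]);
 (2, [:: 2; 1; 3; 4; 0]);
 (1, [:: 0; 1; 3; 2; 4]);
 (5, [:: 1; 2; 3; 4; 0]);
 (4, [:: 1; 2; 3; 4; 0]);
 (4, [:: 0; 3; 2; 1; 4]);
 (4, [:: 3; 0; 2; 1; 4]);
 (4, [:: 2; 1; 3; 4; 0]);
 (5, [:: 2; 1; 3; 4; 0]);
 (1, [:: 1; 0; 3; 2; 4]);
 (5, [:: 2; 4; 3; 0; 1]);
 (0, [:: 0; 1; 2; 3; 4]);
 (0, [:: 0; 1; 2; 3; 4]);
 (0, [:: 0; 1; 2; 3; 4]);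
 (4, [:: 3; 1; 2; 4; 0]);
 (4, [:: 2; 0; 3; 1; 4]);
 (0, [:: 0; 1; 2; 3; 4]);
 (5, [:: 1; 0; 3; 2; 4]);
 (2, [:: 0; 1; 4; 2; 3]);
 (0, [:: 0; 1; 2; 3; 4]);
 (5, [:: 4; 3; 2; 0; 1]);
 (0, [:: 0; 1; 2; 3; 4]);
 (3, [:: 3; 0; 2; 1; 4]);
 (4, [:: 3; 4; 2; 0; 1]);
 (2, [:: 0; 3; 4; 1; 2]);
 (1, [:: 0; 4; 3; 1; 2]);
 (4, [:: 0; 1; 2; 4; 3]);
 (5, [:: 0; 2; 1; 4; 3]);
 (0, [:: 0; 1; 2; 3; 4]);
 (0, [:: 0; 1; 2; 3; 4]);
 (5, [:: 1; 4; 3; 0; 2]);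
 (2, [:: 2; 0; 3; 1; 4]);
 (0, [:: 0; 1; 2; 3; 4]);
 (5, [:: 0; 4; 1; 3; 2]);
 (0, [:: 0; 1; 2; 3; 4]);
 (0, [:: 0; 1; 2; 3; 4]);
 (0, [:: 0; 1; 2; 3; 4]);
 (0, [:: 0; 1; 2; 3; 4]);
 (0, [:: 0; 1; 2; 3; 4]);
 (0, [:: 0; 1; 2; 3; 4]);
 (0, [:: 0; 1; 2; 3; 4]);
 (0, [:: 0; 1; 2; 3; 4]);
 (4, [:: 1; 4; 3; 0; 2]);
 (0, [:: 0; 1; 2; 3; 4]);
 (0, [:: 0; 1; 2; 3; 4]);
 (0, [:: 0; 1; 2; 3; 4]);
 (1, [:: 0; 2; 3; 4; 1]);
 (1, [:: 1; 4; 3; 0; 2]);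
 (0, [:: 0; 1; 2; 3; 4]);
 (4, [:: 0; 4; 2; 3; 1]);
 (5, [:: 4; 0; 2; 1; 3]);
 (0, [:: 0; 1; 2; 3; 4]);
 (0, [:: 0; 1; 2; 3; 4]);
 (0, [:: 0; 1; 2; 3; 4]);
 (2, [:: 0; 2; 4; 3; 1]);
 (5, [:: 2; 0; 3; 1; 4]);
 (5, [:: 4; 1; 2; 3; 0]);
 (4, [:: 1; 0; 3; 2; 4]);
 (2, [:: 2; 3; 4; 0; 1]);
 (1, [:: 1; 3; 2; 4; 0]);
 (5, [:: 1; 3; 2; 4; 0]);
 (1, [:: 0; 3; 1; 2; 4]);
 (0, [:: 0; 1; 2; 3; 4]);
 (5, [:: 2; 3; 4; 0; 1]);
 (0, [:: 0; 1; 2; 3; 4]);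
 (2, [:: 0; 4; 1; 2; 3]);
 (5, [:: 0; 1; 3; 2; 4]);
 (0, [:: 0; 1; 2; 3; 4]);
 (4, [:: 0; 2; 3; 1; 4]);
 (4, [:: 1; 3; 2; 4; 0]);
 (0, [:: 0; 1; 2; 3; 4]);
 (0, [:: 0; 1; 2; 3; 4]);
 (0, [:: 0; 1; 2; 3; 4]);
 (5, [:: 4; 2; 3; 0; 1]);
 (3, [:: 2; 3; 0; 1; 4]);
 (4, [:: 2; 3; 4; 0; 1]);
 (4, [:: 2; 3; 1; 4; 0]);
 (4, [:: 3; 2; 0; 1; 4]);
 (4, [:: 2; 3; 0; 1; 4]);
 (4, [:: 3; 2; 1; 4; 0]);
 (4, [:: 3; 2; 4; 0; 1]);
 (3, [:: 3; 2; 0; 1; 4]);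
 (2, [:: 2; 3; 1; 4; 0]);
 (0, [:: 0; 1; 2; 3; 4]);
 (1, [:: 1; 3; 0; 2; 4]);
 (5, [:: 2; 3; 1; 4; 0]);
 (5, [:: 1; 3; 0; 2; 4]);
 (0, [:: 0; 1; 2; 3; 4]);
 (1, [:: 0; 3; 4; 1; 2]);
 (2, [:: 0; 4; 3; 1; 2]);
 (5, [:: 0; 1; 2; 4; 3]);
 (4, [:: 0; 2; 1; 4; 3]);
 (0, [:: 0; 1; 2; 3; 4]);
 (0, [:: 0; 1; 2; 3; 4]);
 (0, [:: 0; 1; 2; 3; 4]);
 (4, [:: 1; 3; 4; 0; 2]);
 (0, [:: 0; 1; 2; 3; 4]);
 (5, [:: 4; 2; 0; 1; 3]);
 (0, [:: 0; 1; 2; 3; 4]);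
 (0, [:: 0; 1; 2; 3; 4]);
 (0, [:: 0; 1; 2; 3; 4]);
 (0, [:: 0; 1; 2; 3; 4]);
 (0, [:: 0; 1; 2; 3; 4]);
 (0, [:: 0; 1; 2; 3; 4]);
 (0, [:: 0; 1; 2; 3; 4]);
 (0, [:: 0; 1; 2; 3; 4]);
 (2, [:: 2; 3; 0; 1; 4]);
 (5, [:: 1; 3; 4; 0; 2]);
 (0, [:: 0; 1; 2; 3; 4]);
 (0, [:: 0; 1; 2; 3; 4]);
 (1, [:: 1; 3; 4; 0; 2]);
 (1, [:: 0; 3; 2; 4; 1]);
 (5, [:: 2; 3; 0; 1; 4]);
 (2, [:: 0; 4; 2; 3; 1]);
 (5, [:: 0; 1; 4; 3; 2]);
 (0, [:: 0; 1; 2; 3; 4]);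
 (0, [:: 0; 1; 2; 3; 4]);
 (0, [:: 0; 1; 2; 3; 4]);
 (4, [:: 0; 2; 4; 3; 1]);
 (0, [:: 0; 1; 2; 3; 4]);
 (4, [:: 1; 3; 0; 2; 4]);
 (5, [:: 4; 2; 1; 3; 0]);
 (1, [:: 2; 4; 3; 0; 1]);
 (0, [:: 0; 2; 1; 3; 4]);
 (0, [:: 0; 1; 2; 3; 4]);
 (2, [:: 1; 3; 2; 4; 0]);
 (0, [:: 0; 1; 2; 3; 4]);
 (2, [:: 4; 1; 0; 2; 3]);
 (0, [:: 0; 1; 2; 3; 4]);
 (3, [:: 0; 4; 1; 2; 3]);
 (1, [:: 4; 0; 3; 1; 2]);
 (2, [:: 3; 0; 4; 1; 2]);
 (4, [:: 4; 3; 2; 0; 1]);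
 (3, [:: 0; 3; 2; 1; 4]);
 (0, [:: 0; 1; 2; 3; 4]);
 (5, [:: 3; 4; 2; 0; 1]);
 (0, [:: 0; 1; 2; 3; 4]);
 (2, [:: 1; 0; 4; 2; 3]);
 (2, [:: 4; 0; 3; 1; 2]);
 (1, [:: 3; 0; 4; 1; 2]);
 (0, [:: 0; 1; 2; 3; 4]);
 (5, [:: 3; 1; 0; 2; 4]);
 (5, [:: 3; 2; 1; 4; 0]);
 (1, [:: 3; 1; 0; 2; 4]);
 (0, [:: 0; 1; 2; 3; 4]);
 (2, [:: 3; 2; 1; 4; 0]);
 (0, [:: 0; 1; 4; 2; 3]);
 (1, [:: 3; 4; 2; 0; 1]);
 (1, [:: 2; 3; 1; 4; 0]);
 (2, [:: 4; 3; 2; 0; 1]);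
 (2, [:: 3; 4; 2; 0; 1]);
 (1, [:: 3; 2; 1; 4; 0]);
 (1, [:: 4; 3; 2; 0; 1]);
 (0, [:: 0; 4; 3; 1; 2]);
 (4, [:: 4; 0; 3; 1; 2]);
 (1, [:: 4; 1; 0; 2; 3]);
 (0, [:: 0; 1; 2; 3; 4]);
 (0, [:: 0; 1; 2; 3; 4]);
 (0, [:: 0; 1; 2; 3; 4]);
 (1, [:: 2; 0; 4; 1; 3]);
 (0, [:: 0; 1; 2; 3; 4]);
 (4, [:: 4; 1; 0; 2; 3]);
 (0, [:: 0; 1; 2; 3; 4]);
 (0, [:: 0; 1; 2; 3; 4]);
 (0, [:: 0; 1; 2; 3; 4]);
 (0, [:: 0; 1; 2; 3; 4]);
 (0, [:: 0; 1; 2; 3; 4]);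
 (0, [:: 0; 1; 2; 3; 4]);
 (0, [:: 0; 1; 2; 3; 4]);
 (0, [:: 0; 1; 2; 3; 4]);
 (3, [:: 0; 1; 3; 4; 2]);
 (2, [:: 3; 1; 0; 2; 4]);
 (0, [:: 0; 1; 2; 3; 4]);
 (0, [:: 0; 1; 2; 3; 4]);
 (2, [:: 1; 4; 3; 0; 2]);
 (0, [:: 0; 3; 2; 4; 1]);
 (0, [:: 0; 1; 2; 3; 4]);
 (1, [:: 4; 2; 1; 3; 0]);
 (2, [:: 1; 2; 0; 3; 4]);
 (5, [:: 3; 0; 4; 1; 2]);
 (0, [:: 0; 1; 2; 3; 4]);
 (0, [:: 0; 1; 2; 3; 4]);
 (3, [:: 0; 2; 4; 3; 1]);
 (2, [:: 4; 2; 1; 3; 0]);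
 (4, [:: 4; 2; 1; 3; 0]);
 (1, [:: 2; 1; 0; 3; 4]);
 (2, [:: 0; 1; 2; 3; 4]);
 (5, [:: 4; 3; 0; 1; 2]);
 (3, [:: 3; 0; 1; 4; 2]);
 (2, [:: 0; 3; 1; 2; 4]);
 (0, [:: 0; 1; 2; 3; 4]);
 (0, [:: 0; 1; 2; 3; 4]);
 (4, [:: 3; 4; 0; 1; 2]);
 (1, [:: 0; 4; 1; 2; 3]);
 (5, [:: 4; 0; 1; 3; 2]);
 (0, [:: 0; 1; 2; 3; 4]);
 (2, [:: 0; 2; 3; 1; 4]);
 (5, [:: 4; 1; 3; 0; 2]);
 (0, [:: 0; 1; 2; 3; 4]);
 (0, [:: 0; 1; 2; 3; 4]);
 (5, [:: 2; 0; 1; 4; 3]);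
 (4, [:: 1; 0; 2; 4; 3]);
 (5, [:: 2; 4; 0; 1; 3]);
 (0, [:: 0; 1; 2; 3; 4]);
 (4, [:: 3; 1; 4; 0; 2]);
 (0, [:: 0; 1; 2; 3; 4]);
 (0, [:: 0; 1; 2; 3; 4]);
 (0, [:: 0; 1; 2; 3; 4]);
 (4, [:: 2; 0; 1; 4; 3]);
 (5, [:: 1; 0; 2; 4; 3]);
 (4, [:: 1; 4; 0; 2; 3]);
 (0, [:: 0; 1; 2; 3; 4]);
 (1, [:: 0; 2; 4; 1; 3]);
 (0, [:: 0; 1; 2; 3; 4]);
 (0, [:: 0; 1; 2; 3; 4]);
 (0, [:: 0; 1; 2; 3; 4]);
 (1, [:: 1; 4; 0; 2; 3]);
 (4, [:: 0; 4; 3; 1; 2]);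
 (1, [:: 0; 1; 2; 4; 3]);
 (4, [:: 1; 2; 4; 0; 3]);
 (4, [:: 3; 0; 1; 4; 2]);
 (5, [:: 2; 1; 4; 0; 3]);
 (5, [:: 1; 2; 4; 0; 3]);
 (4, [:: 0; 3; 1; 4; 2]);
 (4, [:: 2; 1; 4; 0; 3]);
 (1, [:: 1; 0; 2; 4; 3]);
 (0, [:: 0; 1; 2; 3; 4]);
 (0, [:: 0; 1; 2; 3; 4]);
 (0, [:: 0; 1; 2; 3; 4]);
 (0, [:: 0; 1; 2; 3; 4]);
 (0, [:: 0; 1; 2; 3; 4]);
 (0, [:: 0; 1; 2; 3; 4]);
 (0, [:: 0; 1; 2; 3; 4]);
 (0, [:: 0; 1; 2; 3; 4]);
 (1, [:: 1; 2; 4; 0; 3]);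
 (0, [:: 0; 1; 2; 3; 4]);
 (4, [:: 2; 4; 0; 1; 3]);
 (0, [:: 0; 1; 2; 3; 4]);
 (2, [:: 2; 4; 0; 1; 3]);
 (5, [:: 0; 3; 2; 4; 1]);
 (3, [:: 2; 0; 1; 4; 3]);
 (2, [:: 2; 1; 4; 0; 3]);
 (4, [:: 0; 1; 4; 3; 2]);
 (0, [:: 0; 1; 2; 3; 4]);
 (5, [:: 1; 4; 0; 2; 3]);
 (0, [:: 0; 1; 2; 3; 4]);
 (5, [:: 0; 2; 4; 3; 1]);
 (0, [:: 0; 1; 2; 3; 4]);
 (2, [:: 2; 0; 1; 4; 3]);
 (5, [:: 0; 4; 3; 2; 1]);
 (0, [:: 0; 1; 2; 3; 4]);
 (0, [:: 0; 1; 2; 3; 4]);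
 (0, [:: 0; 1; 2; 3; 4]);
 (0, [:: 0; 1; 2; 3; 4]);
 (0, [:: 0; 1; 2; 3; 4]);
 (0, [:: 0; 1; 2; 3; 4]);
 (0, [:: 0; 1; 2; 3; 4]);
 (0, [:: 0; 1; 2; 3; 4]);
 (0, [:: 0; 1; 2; 3; 4]);
 (0, [:: 0; 1; 2; 3; 4]);
 (0, [:: 0; 1; 2; 3; 4]);
 (0, [:: 0; 1; 2; 3; 4]);
 (0, [:: 0; 1; 2; 3; 4]);
 (0, [:: 0; 1; 2; 3; 4]);
 (0, [:: 0; 1; 2; 3; 4]);
 (0, [:: 0; 1; 2; 3; 4]);
 (0, [:: 0; 1; 2; 3; 4]);
 (0, [:: 0; 1; 2; 3; 4]);
 (0, [:: 0; 1; 2; 3; 4]);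
 (0, [:: 0; 1; 2; 3; 4]);
 (0, [:: 0; 1; 2; 3; 4]);
 (0, [:: 0; 1; 2; 3; 4]);
 (0, [:: 0; 1; 2; 3; 4]);
 (0, [:: 0; 1; 2; 3; 4]);
 (0, [:: 0; 1; 2; 3; 4]);
 (0, [:: 0; 1; 2; 3; 4]);
 (0, [:: 0; 1; 2; 3; 4]);
 (0, [:: 0; 1; 2; 3; 4]);
 (0, [:: 0; 1; 2; 3; 4]);
 (0, [:: 0; 1; 2; 3; 4]);
 (0, [:: 0; 1; 2; 3; 4]);
 (0, [:: 0; 1; 2; 3; 4]);
 (0, [:: 0; 1; 2; 3; 4]);
 (0, [:: 0; 1; 2; 3; 4]);
 (0, [:: 0; 1; 2; 3; 4]);
 (0, [:: 0; 1; 2; 3; 4]);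
 (0, [:: 0; 1; 2; 3; 4]);
 (0, [:: 0; 1; 2; 3; 4]);
 (0, [:: 0; 1; 2; 3; 4]);
 (0, [:: 0; 1; 2; 3; 4]);
 (0, [:: 0; 1; 2; 3; 4]);
 (0, [:: 0; 1; 2; 3; 4]);
 (0, [:: 0; 1; 2; 3; 4]);
 (0, [:: 0; 1; 2; 3; 4]);
 (0, [:: 0; 1; 2; 3; 4]);
 (0, [:: 0; 1; 2; 3; 4]);
 (0, [:: 0; 1; 2; 3; 4]);
 (0, [:: 0; 1; 2; 3; 4]);
 (0, [:: 0; 1; 2; 3; 4]);
 (0, [:: 0; 1; 2; 3; 4]);
 (0, [:: 0; 1; 2; 3; 4]);
 (0, [:: 0; 1; 2; 3; 4]);
 (0, [:: 0; 1; 2; 3; 4]);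
 (0, [:: 0; 1; 2; 3; 4]);
 (0, [:: 0; 1; 2; 3; 4]);
 (0, [:: 0; 1; 2; 3; 4]);
 (0, [:: 0; 1; 2; 3; 4]);
 (0, [:: 0; 1; 2; 3; 4]);
 (0, [:: 0; 1; 2; 3; 4]);
 (0, [:: 0; 1; 2; 3; 4]);
 (0, [:: 0; 1; 2; 3; 4]);
 (0, [:: 0; 1; 2; 3; 4]);
 (0, [:: 0; 1; 2; 3; 4]);
 (0, [:: 0; 1; 2; 3; 4]);
 (3, [:: 0; 1; 2; 3; 4]);
 (2, [:: 1; 4; 2; 3; 0]);
 (2, [:: 3; 1; 4; 0; 2]);
 (0, [:: 0; 3; 1; 2; 4]);
 (0, [:: 0; 1; 2; 3; 4]);
 (0, [:: 0; 1; 2; 3; 4]);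
 (0, [:: 0; 1; 2; 3; 4]);
 (1, [:: 4; 2; 0; 1; 3]);
 (4, [:: 4; 0; 2; 3; 1]);
 (0, [:: 0; 1; 2; 3; 4]);
 (1, [:: 4; 1; 3; 0; 2]);
 (1, [:: 2; 0; 3; 4; 1]);
 (0, [:: 0; 1; 2; 3; 4]);
 (0, [:: 0; 1; 2; 3; 4]);
 (0, [:: 0; 1; 2; 3; 4]);
 (4, [:: 4; 1; 3; 0; 2]);
 (2, [:: 4; 0; 2; 3; 1]);
 (5, [:: 3; 2; 0; 1; 4]);
 (1, [:: 3; 0; 2; 4; 1]);
 (1, [:: 3; 1; 4; 0; 2]);
 (0, [:: 0; 1; 2; 3; 4]);
 (0, [:: 0; 1; 2; 3; 4]);
 (5, [:: 3; 1; 4; 0; 2]);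
 (2, [:: 3; 2; 0; 1; 4]);
 (1, [:: 2; 4; 1; 3; 0]);
 (0, [:: 0; 1; 2; 3; 4]);
 (0, [:: 0; 2; 4; 1; 3]);
 (2, [:: 4; 1; 3; 0; 2]);
 (0, [:: 0; 1; 2; 3; 4]);
 (0, [:: 0; 1; 2; 3; 4]);
 (2, [:: 1; 3; 0; 2; 4]);
 (3, [:: 0; 4; 3; 1; 2]);
 (2, [:: 1; 2; 4; 0; 3]);
 (3, [:: 0; 2; 1; 4; 3]);
 (5, [:: 3; 0; 2; 4; 1]);
 (2, [:: 4; 2; 0; 1; 3]);
 (0, [:: 0; 1; 2; 3; 4]);
 (4, [:: 4; 2; 0; 1; 3]);
 (0, [:: 0; 1; 2; 3; 4]);
 (1, [:: 2; 1; 4; 0; 3]);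
 (0, [:: 0; 1; 2; 3; 4]);
 (0, [:: 0; 1; 2; 3; 4]);
 (0, [:: 0; 1; 2; 3; 4]);
 (0, [:: 0; 1; 2; 3; 4]);
 (0, [:: 0; 1; 2; 3; 4]);
 (0, [:: 0; 1; 2; 3; 4]);
 (0, [:: 0; 1; 2; 3; 4]);
 (0, [:: 0; 1; 2; 3; 4]);
 (0, [:: 0; 1; 3; 4; 2]);
 (2, [:: 3; 4; 1; 2; 0]);
 (1, [:: 3; 4; 1; 2; 0]);
 (1, [:: 3; 2; 0; 1; 4]);
 (1, [:: 2; 3; 0; 1; 4]);
 (1, [:: 4; 3; 1; 2; 0]);
 (2, [:: 4; 3; 1; 2; 0]);
 (0, [:: 0; 4; 2; 3; 1]);
 (1, [:: 4; 0; 2; 3; 1]);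
 (0, [:: 0; 1; 2; 3; 4]);
 (2, [:: 3; 0; 2; 4; 1]);
 (5, [:: 3; 4; 1; 2; 0]);
 (4, [:: 4; 3; 1; 2; 0]);
 (0, [:: 0; 1; 2; 3; 4]);
 (3, [:: 0; 3; 4; 2; 1]);
 (2, [:: 1; 0; 3; 4; 2]);
 (4, [:: 1; 4; 2; 3; 0]);
 (1, [:: 0; 2; 1; 3; 4]);
 (0, [:: 0; 1; 2; 3; 4]);
 (1, [:: 1; 4; 2; 3; 0]);
 (0, [:: 0; 1; 2; 3; 4]);
 (0, [:: 0; 1; 2; 3; 4]);
 (0, [:: 0; 1; 2; 3; 4]);
 (4, [:: 0; 4; 1; 2; 3]);
 (4, [:: 0; 1; 3; 2; 4]);
 (5, [:: 1; 4; 2; 3; 0]);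
 (5, [:: 0; 2; 3; 1; 4]);
 (2, [:: 2; 0; 4; 3; 1]);
 (0, [:: 0; 1; 2; 3; 4]);
 (0, [:: 0; 1; 2; 3; 4]);
 (0, [:: 0; 1; 2; 3; 4]);
 (5, [:: 0; 4; 2; 1; 3]);
 (5, [:: 2; 4; 1; 3; 0]);
 (4, [:: 3; 1; 0; 2; 4]);
 (0, [:: 0; 1; 2; 3; 4]);
 (4, [:: 2; 0; 4; 3; 1]);
 (0, [:: 0; 1; 2; 3; 4]);
 (0, [:: 0; 1; 2; 3; 4]);
 (0, [:: 0; 1; 2; 3; 4]);
 (5, [:: 1; 0; 4; 3; 2]);
 (1, [:: 1; 2; 0; 3; 4]);
 (4, [:: 2; 4; 1; 3; 0]);
 (2, [:: 2; 4; 1; 3; 0]);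
 (3, [:: 2; 0; 4; 3; 1]);
 (0, [:: 0; 1; 2; 3; 4]);
 (0, [:: 0; 1; 2; 3; 4]);
 (5, [:: 0; 3; 4; 1; 2]);
 (2, [:: 2; 1; 0; 3; 4]);
 (5, [:: 4; 0; 3; 2; 1]);
 (2, [:: 0; 2; 1; 4; 3]);
 (0, [:: 0; 1; 2; 3; 4]);
 (5, [:: 2; 0; 4; 3; 1]);
 (0, [:: 0; 1; 2; 3; 4]);
 (5, [:: 4; 1; 0; 2; 3]);
 (0, [:: 0; 1; 2; 3; 4]);
 (4, [:: 1; 0; 4; 3; 2]);
 (0, [:: 0; 1; 2; 3; 4]);
 (0, [:: 0; 1; 2; 3; 4]);
 (0, [:: 0; 1; 2; 3; 4]);
 (0, [:: 0; 1; 2; 3; 4]);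
 (0, [:: 0; 1; 2; 3; 4]);
 (0, [:: 0; 1; 2; 3; 4]);
 (0, [:: 0; 1; 2; 3; 4]);
 (0, [:: 0; 1; 2; 3; 4]);
 (2, [:: 0; 1; 3; 4; 2]);
 (3, [:: 3; 0; 4; 2; 1]);
 (0, [:: 0; 1; 2; 3; 4]);
 (4, [:: 3; 4; 1; 2; 0]);
 (5, [:: 4; 3; 1; 2; 0]);
 (2, [:: 0; 3; 2; 4; 1]);
 (0, [:: 0; 1; 2; 3; 4]);
 (1, [:: 0; 4; 2; 3; 1]);
 (1, [:: 0; 1; 4; 3; 2]);
 (4, [:: 3; 0; 4; 2; 1]);
 (5, [:: 1; 2; 0; 3; 4]);
 (4, [:: 2; 1; 0; 3; 4]);
 (4, [:: 1; 2; 0; 3; 4]);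
 (5, [:: 2; 1; 0; 3; 4]);
 (4, [:: 0; 3; 4; 2; 1]);
 (1, [:: 1; 0; 4; 3; 2]);
 (1, [:: 0; 1; 2; 3; 4]);
 (4, [:: 1; 2; 4; 3; 0]);
 (5, [:: 1; 2; 4; 3; 0]);
 (4, [:: 0; 3; 1; 2; 4]);
 (4, [:: 3; 0; 1; 2; 4]);
 (5, [:: 2; 1; 4; 3; 0]);
 (4, [:: 2; 1; 4; 3; 0]);
 (1, [:: 1; 0; 2; 3; 4]);
 (1, [:: 1; 2; 4; 3; 0]);
 (0, [:: 0; 1; 2; 3; 4]);
 (2, [:: 2; 4; 0; 3; 1]);
 (5, [:: 0; 3; 2; 1; 4]);
 (4, [:: 2; 4; 0; 3; 1]);
 (0, [:: 0; 1; 2; 3; 4]);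
 (3, [:: 2; 0; 1; 3; 4]);
 (2, [:: 2; 1; 4; 3; 0]);
 (0, [:: 0; 1; 2; 3; 4]);
 (0, [:: 0; 1; 2; 3; 4]);
 (0, [:: 0; 1; 2; 3; 4]);
 (0, [:: 0; 1; 2; 3; 4]);
 (0, [:: 0; 1; 2; 3; 4]);
 (0, [:: 0; 1; 2; 3; 4]);
 (0, [:: 0; 1; 2; 3; 4]);
 (0, [:: 0; 1; 2; 3; 4]);
 (4, [:: 0; 1; 4; 2; 3]);
 (0, [:: 0; 1; 2; 3; 4]);
 (5, [:: 0; 2; 4; 1; 3]);
 (0, [:: 0; 1; 2; 3; 4]);
 (5, [:: 1; 4; 0; 3; 2]);
 (0, [:: 0; 1; 2; 3; 4]);
 (2, [:: 2; 0; 1; 3; 4]);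
 (5, [:: 0; 4; 3; 1; 2]);
 (2, [:: 0; 1; 2; 4; 3]);
 (5, [:: 4; 3; 0; 2; 1]);
 (0, [:: 0; 1; 2; 3; 4]);
 (0, [:: 0; 1; 2; 3; 4]);
 (3, [:: 3; 0; 1; 2; 4]);
 (2, [:: 0; 3; 1; 4; 2]);
 (4, [:: 3; 4; 0; 2; 1]);
 (1, [:: 0; 4; 1; 3; 2]);
 (5, [:: 2; 4; 0; 3; 1]);
 (0, [:: 0; 1; 2; 3; 4]);
 (0, [:: 0; 1; 2; 3; 4]);
 (0, [:: 0; 1; 2; 3; 4]);
 (4, [:: 3; 1; 4; 2; 0]);
 (0, [:: 0; 1; 2; 3; 4]);
 (4, [:: 2; 0; 1; 3; 4]);
 (5, [:: 1; 0; 2; 3; 4]);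
 (5, [:: 4; 0; 1; 2; 3]);
 (0, [:: 0; 1; 2; 3; 4]);
 (0, [:: 0; 1; 2; 3; 4]);
 (0, [:: 0; 1; 2; 3; 4]);
 (2, [:: 0; 2; 3; 4; 1]);
 (5, [:: 4; 1; 3; 2; 0]);
 (5, [:: 2; 0; 1; 3; 4]);
 (4, [:: 1; 0; 2; 3; 4]);
 (4, [:: 1; 4; 0; 3; 2]);
 (0, [:: 0; 1; 2; 3; 4]);
 (0, [:: 0; 1; 2; 3; 4]);
 (0, [:: 0; 1; 2; 3; 4]);
 (1, [:: 0; 2; 4; 3; 1]);
 (0, [:: 0; 1; 2; 3; 4]);
 (1, [:: 1; 4; 0; 3; 2]);
 (4, [:: 0; 4; 3; 2; 1]);
 (2, [:: 1; 2; 4; 3; 0]);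
 (3, [:: 0; 2; 1; 3; 4]);
 (0, [:: 0; 1; 2; 3; 4]);
 (4, [:: 4; 2; 0; 3; 1]);
 (5, [:: 3; 0; 2; 1; 4]);
 (2, [:: 4; 2; 0; 3; 1]);
 (0, [:: 0; 1; 2; 3; 4]);
 (1, [:: 2; 1; 4; 3; 0]);
 (0, [:: 0; 1; 3; 2; 4]);
 (2, [:: 3; 4; 1; 0; 2]);
 (1, [:: 2; 3; 0; 4; 1]);
 (1, [:: 4; 3; 1; 0; 2]);
 (1, [:: 3; 4; 1; 0; 2]);
 (1, [:: 3; 2; 0; 4; 1]);
 (2, [:: 4; 3; 1; 0; 2]);
 (0, [:: 0; 4; 2; 1; 3]);
 (0, [:: 0; 1; 2; 3; 4]);
 (0, [:: 0; 1; 2; 3; 4]);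
 (0, [:: 0; 1; 2; 3; 4]);
 (0, [:: 0; 1; 2; 3; 4]);
 (0, [:: 0; 1; 2; 3; 4]);
 (0, [:: 0; 1; 2; 3; 4]);
 (0, [:: 0; 1; 2; 3; 4]);
 (0, [:: 0; 1; 2; 3; 4]);
 (1, [:: 4; 0; 2; 1; 3]);
 (0, [:: 0; 1; 2; 3; 4]);
 (4, [:: 4; 3; 1; 0; 2]);
 (0, [:: 0; 1; 2; 3; 4]);
 (2, [:: 3; 0; 2; 1; 4]);
 (5, [:: 3; 4; 1; 0; 2]);
 (3, [:: 0; 3; 4; 1; 2]);
 (2, [:: 1; 0; 3; 2; 4]);
 (3, [:: 0; 1; 2; 4; 3]);
 (2, [:: 1; 4; 2; 0; 3]);
 (0, [:: 0; 1; 2; 3; 4]);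
 (0, [:: 0; 1; 2; 3; 4]);
 (2, [:: 3; 1; 4; 2; 0]);
 (0, [:: 0; 3; 1; 4; 2]);
 (0, [:: 0; 1; 2; 3; 4]);
 (1, [:: 4; 2; 0; 3; 1]);
 (2, [:: 4; 0; 2; 1; 3]);
 (5, [:: 3; 2; 0; 4; 1]);
 (0, [:: 0; 1; 2; 3; 4]);
 (0, [:: 0; 1; 2; 3; 4]);
 (1, [:: 3; 0; 2; 1; 4]);
 (1, [:: 3; 1; 4; 2; 0]);
 (5, [:: 3; 1; 4; 2; 0]);
 (2, [:: 3; 2; 0; 4; 1]);
 (4, [:: 4; 0; 2; 1; 3]);
 (0, [:: 0; 1; 2; 3; 4]);
 (0, [:: 0; 1; 2; 3; 4]);
 (0, [:: 0; 1; 2; 3; 4]);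
 (1, [:: 4; 1; 3; 2; 0]);
 (1, [:: 2; 0; 3; 1; 4]);
 (0, [:: 0; 1; 2; 3; 4]);
 (4, [:: 4; 1; 3; 2; 0]);
 (1, [:: 2; 4; 1; 0; 3]);
 (0, [:: 0; 1; 2; 3; 4]);
 (0, [:: 0; 1; 2; 3; 4]);
 (0, [:: 0; 1; 2; 3; 4]);
 (0, [:: 0; 2; 4; 3; 1]);
 (2, [:: 4; 1; 3; 2; 0]);
 (2, [:: 1; 3; 0; 4; 2]);
 (3, [:: 0; 4; 3; 2; 1]);
 (0, [:: 0; 1; 2; 3; 4]);
 (0, [:: 0; 1; 2; 3; 4]);
 (0, [:: 0; 1; 2; 3; 4]);
 (0, [:: 0; 1; 2; 3; 4]);
 (0, [:: 0; 1; 2; 3; 4]);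
 (0, [:: 0; 1; 2; 3; 4]);
 (0, [:: 0; 1; 2; 3; 4]);
 (0, [:: 0; 1; 2; 3; 4]);
 (0, [:: 0; 1; 2; 3; 4]);
 (0, [:: 0; 1; 2; 3; 4]);
 (0, [:: 0; 1; 2; 3; 4]);
 (0, [:: 0; 1; 2; 3; 4]);
 (0, [:: 0; 1; 2; 3; 4]);
 (0, [:: 0; 1; 2; 3; 4]);
 (0, [:: 0; 1; 2; 3; 4]);
 (0, [:: 0; 1; 2; 3; 4]);
 (0, [:: 0; 1; 2; 3; 4]);
 (0, [:: 0; 1; 2; 3; 4]);
 (0, [:: 0; 1; 2; 3; 4]);
 (0, [:: 0; 1; 2; 3; 4]);
 (0, [:: 0; 1; 2; 3; 4]);
 (0, [:: 0; 1; 2; 3; 4]);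
 (0, [:: 0; 1; 2; 3; 4]);
 (0, [:: 0; 1; 2; 3; 4]);
 (0, [:: 0; 1; 2; 3; 4]);
 (0, [:: 0; 1; 2; 3; 4]);
 (0, [:: 0; 1; 2; 3; 4]);
 (0, [:: 0; 1; 2; 3; 4]);
 (0, [:: 0; 1; 2; 3; 4]);
 (0, [:: 0; 1; 2; 3; 4]);
 (0, [:: 0; 1; 2; 3; 4]);
 (0, [:: 0; 1; 2; 3; 4]);
 (0, [:: 0; 1; 2; 3; 4]);
 (0, [:: 0; 1; 2; 3; 4]);
 (0, [:: 0; 1; 2; 3; 4]);
 (0, [:: 0; 1; 2; 3; 4]);
 (0, [:: 0; 1; 2; 3; 4]);
 (0, [:: 0; 1; 2; 3; 4]);
 (0, [:: 0; 1; 2; 3; 4]);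
 (0, [:: 0; 1; 2; 3; 4]);
 (0, [:: 0; 1; 2; 3; 4]);
 (0, [:: 0; 1; 2; 3; 4]);
 (0, [:: 0; 1; 2; 3; 4]);
 (0, [:: 0; 1; 2; 3; 4]);
 (0, [:: 0; 1; 2; 3; 4]);
 (0, [:: 0; 1; 2; 3; 4]);
 (0, [:: 0; 1; 2; 3; 4]);
 (0, [:: 0; 1; 2; 3; 4]);
 (0, [:: 0; 1; 2; 3; 4]);
 (0, [:: 0; 1; 2; 3; 4]);
 (0, [:: 0; 1; 2; 3; 4]);
 (0, [:: 0; 1; 2; 3; 4]);
 (0, [:: 0; 1; 2; 3; 4]);
 (0, [:: 0; 1; 2; 3; 4]);
 (0, [:: 0; 1; 2; 3; 4]);
 (0, [:: 0; 1; 2; 3; 4]);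
 (0, [:: 0; 1; 2; 3; 4]);
 (0, [:: 0; 1; 2; 3; 4]);
 (0, [:: 0; 1; 2; 3; 4]);
 (0, [:: 0; 1; 2; 3; 4]);
 (0, [:: 0; 1; 2; 3; 4]);
 (0, [:: 0; 1; 2; 3; 4]);
 (0, [:: 0; 1; 2; 3; 4]);
 (0, [:: 0; 1; 2; 3; 4]);
 (5, [:: 4; 0; 3; 1; 2]);
 (2, [:: 0; 2; 1; 3; 4]);
 (0, [:: 0; 1; 2; 3; 4]);
 (5, [:: 4; 1; 0; 3; 2]);
 (0, [:: 0; 1; 2; 3; 4]);
 (5, [:: 2; 0; 4; 1; 3]);
 (0, [:: 0; 1; 2; 3; 4]);
 (4, [:: 1; 0; 4; 2; 3]);
 (2, [:: 0; 1; 3; 2; 4]);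
 (3, [:: 3; 0; 4; 1; 2]);
 (5, [:: 4; 3; 1; 0; 2]);
 (2, [:: 0; 3; 2; 1; 4]);
 (0, [:: 0; 1; 2; 3; 4]);
 (4, [:: 3; 4; 1; 0; 2]);
 (0, [:: 0; 1; 2; 3; 4]);
 (1, [:: 0; 4; 2; 1; 3]);
 (0, [:: 0; 1; 2; 3; 4]);
 (0, [:: 0; 1; 2; 3; 4]);
 (0, [:: 0; 1; 2; 3; 4]);
 (0, [:: 0; 1; 2; 3; 4]);
 (0, [:: 0; 1; 2; 3; 4]);
 (0, [:: 0; 1; 2; 3; 4]);
 (0, [:: 0; 1; 2; 3; 4]);
 (0, [:: 0; 1; 2; 3; 4]);
 (1, [:: 0; 1; 4; 2; 3]);
 (4, [:: 3; 0; 4; 1; 2]);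
 (4, [:: 1; 2; 0; 4; 3]);
 (5, [:: 2; 1; 0; 4; 3]);
 (5, [:: 1; 2; 0; 4; 3]);
 (4, [:: 2; 1; 0; 4; 3]);
 (4, [:: 0; 3; 4; 1; 2]);
 (1, [:: 1; 0; 4; 2; 3]);
 (4, [:: 1; 4; 2; 0; 3]);
 (1, [:: 0; 2; 1; 4; 3]);
 (0, [:: 0; 1; 2; 3; 4]);
 (0, [:: 0; 1; 2; 3; 4]);
 (0, [:: 0; 1; 2; 3; 4]);
 (1, [:: 1; 4; 2; 0; 3]);
 (0, [:: 0; 1; 2; 3; 4]);
 (4, [:: 0; 4; 1; 3; 2]);
 (5, [:: 2; 4; 1; 0; 3]);
 (4, [:: 3; 1; 0; 4; 2]);
 (0, [:: 0; 1; 2; 3; 4]);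
 (0, [:: 0; 1; 2; 3; 4]);
 (0, [:: 0; 1; 2; 3; 4]);
 (4, [:: 2; 0; 4; 1; 3]);
 (0, [:: 0; 1; 2; 3; 4]);
 (5, [:: 1; 0; 4; 2; 3]);
 (4, [:: 0; 1; 3; 4; 2]);
 (5, [:: 1; 4; 2; 0; 3]);
 (0, [:: 0; 1; 2; 3; 4]);
 (0, [:: 0; 1; 2; 3; 4]);
 (5, [:: 0; 2; 3; 4; 1]);
 (2, [:: 2; 0; 4; 1; 3]);
 (0, [:: 0; 1; 2; 3; 4]);
 (5, [:: 0; 4; 2; 3; 1]);
 (1, [:: 1; 2; 0; 4; 3]);
 (4, [:: 2; 4; 1; 0; 3]);
 (0, [:: 0; 1; 2; 3; 4]);
 (0, [:: 0; 1; 2; 3; 4]);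
 (2, [:: 2; 4; 1; 0; 3]);
 (3, [:: 2; 0; 4; 1; 3]);
 (5, [:: 0; 3; 4; 2; 1]);
 (2, [:: 2; 1; 0; 4; 3]);
 (1, [:: 4; 0; 1; 3; 2]);
 (4, [:: 4; 3; 0; 2; 1]);
 (2, [:: 3; 0; 1; 4; 2]);
 (3, [:: 0; 3; 1; 2; 4]);
 (0, [:: 0; 1; 2; 3; 4]);
 (0, [:: 0; 1; 2; 3; 4]);
 (5, [:: 3; 4; 0; 2; 1]);
 (2, [:: 1; 0; 2; 4; 3]);
 (1, [:: 2; 4; 0; 3; 1]);
 (0, [:: 0; 1; 2; 3; 4]);
 (0, [:: 0; 2; 3; 1; 4]);
 (2, [:: 1; 3; 4; 2; 0]);
 (0, [:: 0; 1; 2; 3; 4]);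
 (0, [:: 0; 1; 2; 3; 4]);
 (2, [:: 4; 1; 2; 0; 3]);
 (3, [:: 0; 4; 2; 1; 3]);
 (0, [:: 0; 1; 2; 3; 4]);
 (0, [:: 0; 1; 2; 3; 4]);
 (0, [:: 0; 1; 2; 3; 4]);
 (0, [:: 0; 1; 2; 3; 4]);
 (0, [:: 0; 1; 2; 3; 4]);
 (0, [:: 0; 1; 2; 3; 4]);
 (0, [:: 0; 1; 2; 3; 4]);
 (0, [:: 0; 1; 2; 3; 4]);
 (4, [:: 4; 0; 1; 3; 2]);
 (0, [:: 0; 1; 2; 3; 4]);
 (1, [:: 4; 1; 2; 0; 3]);
 (0, [:: 0; 1; 2; 3; 4]);
 (0, [:: 0; 1; 2; 3; 4]);
 (0, [:: 0; 1; 2; 3; 4]);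
 (1, [:: 2; 0; 1; 4; 3]);
 (4, [:: 4; 1; 2; 0; 3]);
 (0, [:: 0; 1; 2; 4; 3]);
 (1, [:: 2; 3; 4; 1; 0]);
 (1, [:: 3; 4; 0; 2; 1]);
 (2, [:: 4; 3; 0; 2; 1]);
 (2, [:: 3; 4; 0; 2; 1]);
 (1, [:: 4; 3; 0; 2; 1]);
 (1, [:: 3; 2; 4; 1; 0]);
 (0, [:: 0; 4; 1; 3; 2]);
 (2, [:: 4; 0; 1; 3; 2]);
 (0, [:: 0; 1; 2; 3; 4]);
 (1, [:: 3; 0; 1; 4; 2]);
 (5, [:: 3; 1; 2; 0; 4]);
 (5, [:: 3; 2; 4; 1; 0]);
 (0, [:: 0; 1; 2; 3; 4]);
 (1, [:: 3; 1; 2; 0; 4]);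
 (2, [:: 3; 2; 4; 1; 0]);
 (2, [:: 1; 2; 3; 0; 4]);
 (0, [:: 0; 1; 2; 3; 4]);
 (5, [:: 3; 0; 1; 4; 2]);
 (0, [:: 0; 1; 2; 3; 4]);
 (3, [:: 0; 2; 3; 4; 1]);
 (4, [:: 4; 2; 3; 1; 0]);
 (2, [:: 4; 2; 3; 1; 0]);
 (1, [:: 2; 1; 3; 0; 4]);
 (3, [:: 0; 1; 4; 3; 2]);
 (0, [:: 0; 1; 2; 3; 4]);
 (2, [:: 3; 1; 2; 0; 4]);
 (0, [:: 0; 1; 2; 3; 4]);
 (2, [:: 1; 4; 0; 3; 2]);
 (0, [:: 0; 1; 2; 3; 4]);
 (0, [:: 0; 3; 4; 2; 1]);
 (1, [:: 4; 2; 3; 1; 0]);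
 (5, [:: 0; 1; 2; 3; 4]);
 (4, [:: 0; 2; 1; 3; 4]);
 (0, [:: 0; 1; 2; 3; 4]);
 (4, [:: 1; 3; 4; 2; 0]);
 (0, [:: 0; 1; 2; 3; 4]);
 (0, [:: 0; 1; 2; 3; 4]);
 (0, [:: 0; 1; 2; 3; 4]);
 (5, [:: 4; 2; 0; 3; 1]);
 (2, [:: 2; 3; 0; 4; 1]);
 (5, [:: 1; 3; 4; 2; 0]);
 (1, [:: 1; 3; 4; 2; 0]);
 (1, [:: 0; 3; 2; 1; 4]);
 (0, [:: 0; 1; 2; 3; 4]);
 (0, [:: 0; 1; 2; 3; 4]);
 (5, [:: 2; 3; 0; 4; 1]);
 (2, [:: 0; 4; 2; 1; 3]);
 (0, [:: 0; 1; 2; 3; 4]);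
 (0, [:: 0; 1; 2; 3; 4]);
 (0, [:: 0; 1; 2; 3; 4]);
 (0, [:: 0; 1; 2; 3; 4]);
 (0, [:: 0; 1; 2; 3; 4]);
 (0, [:: 0; 1; 2; 3; 4]);
 (0, [:: 0; 1; 2; 3; 4]);
 (0, [:: 0; 1; 2; 3; 4]);
 (5, [:: 0; 1; 4; 2; 3]);
 (0, [:: 0; 1; 2; 3; 4]);
 (4, [:: 0; 2; 4; 1; 3]);
 (0, [:: 0; 1; 2; 3; 4]);
 (0, [:: 0; 1; 2; 3; 4]);
 (0, [:: 0; 1; 2; 3; 4]);
 (4, [:: 1; 3; 0; 4; 2]);
 (5, [:: 4; 2; 1; 0; 3]);
 (2, [:: 2; 3; 4; 1; 0]);
 (1, [:: 1; 3; 2; 0; 4]);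
 (0, [:: 0; 1; 2; 3; 4]);
 (5, [:: 2; 3; 4; 1; 0]);
 (5, [:: 1; 3; 2; 0; 4]);
 (1, [:: 0; 3; 1; 4; 2]);
 (0, [:: 0; 1; 2; 3; 4]);
 (2, [:: 0; 4; 1; 3; 2]);
 (3, [:: 2; 3; 0; 4; 1]);
 (4, [:: 2; 3; 4; 1; 0]);
 (4, [:: 2; 3; 0; 4; 1]);
 (4, [:: 3; 2; 1; 0; 4]);
 (4, [:: 2; 3; 1; 0; 4]);
 (4, [:: 3; 2; 0; 4; 1]);
 (4, [:: 3; 2; 4; 1; 0]);
 (3, [:: 3; 2; 0; 4; 1]);
 (5, [:: 0; 1; 3; 4; 2]);
 (0, [:: 0; 1; 2; 3; 4]);
 (0, [:: 0; 1; 2; 3; 4]);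
 (0, [:: 0; 1; 2; 3; 4]);
 (4, [:: 0; 2; 3; 4; 1]);
 (4, [:: 1; 3; 2; 0; 4]);
 (0, [:: 0; 1; 2; 3; 4]);
 (5, [:: 4; 2; 3; 1; 0]);
 (2, [:: 2; 3; 1; 0; 4]);
 (0, [:: 0; 1; 2; 3; 4]);
 (5, [:: 1; 3; 0; 4; 2]);
 (0, [:: 0; 1; 2; 3; 4]);
 (1, [:: 1; 3; 0; 4; 2]);
 (5, [:: 2; 3; 1; 0; 4]);
 (1, [:: 0; 3; 4; 2; 1]);
 (2, [:: 0; 4; 3; 2; 1]);
 (4, [:: 0; 1; 2; 3; 4]);
 (5, [:: 0; 2; 1; 3; 4]);
 (5, [:: 1; 4; 3; 2; 0]);
 (2, [:: 2; 0; 3; 4; 1]);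
 (0, [:: 0; 1; 2; 3; 4]);
 (0, [:: 0; 1; 2; 3; 4]);
 (0, [:: 0; 1; 2; 3; 4]);
 (5, [:: 0; 4; 1; 2; 3]);
 (4, [:: 1; 4; 3; 2; 0]);
 (0, [:: 0; 1; 2; 3; 4]);
 (1, [:: 0; 2; 3; 1; 4]);
 (1, [:: 1; 4; 3; 2; 0]);
 (0, [:: 0; 1; 2; 3; 4]);
 (0, [:: 0; 1; 2; 3; 4]);
 (0, [:: 0; 1; 2; 3; 4]);
 (4, [:: 0; 4; 2; 1; 3]);
 (0, [:: 0; 1; 2; 3; 4]);
 (0, [:: 0; 1; 2; 3; 4]);
 (0, [:: 0; 1; 2; 3; 4]);
 (0, [:: 0; 1; 2; 3; 4]);
 (0, [:: 0; 1; 2; 3; 4]);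
 (0, [:: 0; 1; 2; 3; 4]);
 (0, [:: 0; 1; 2; 3; 4]);
 (0, [:: 0; 1; 2; 3; 4]);
 (5, [:: 4; 0; 2; 3; 1]);
 (0, [:: 0; 1; 2; 3; 4]);
 (2, [:: 0; 2; 4; 1; 3]);
 (5, [:: 2; 0; 3; 4; 1]);
 (0, [:: 0; 1; 2; 3; 4]);
 (0, [:: 0; 1; 2; 3; 4]);
 (5, [:: 4; 1; 2; 0; 3]);
 (4, [:: 1; 0; 3; 4; 2]);
 (1, [:: 1; 2; 3; 0; 4]);
 (2, [:: 2; 4; 3; 1; 0]);
 (4, [:: 2; 4; 3; 1; 0]);
 (3, [:: 2; 0; 3; 4; 1]);
 (0, [:: 0; 1; 2; 3; 4]);
 (5, [:: 0; 3; 1; 4; 2]);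
 (0, [:: 0; 1; 2; 3; 4]);
 (2, [:: 2; 1; 3; 0; 4]);
 (5, [:: 2; 4; 3; 1; 0]);
 (0, [:: 0; 1; 2; 3; 4]);
 (4, [:: 3; 1; 2; 0; 4]);
 (4, [:: 2; 0; 3; 4; 1]);
 (0, [:: 0; 1; 2; 3; 4]);
 (0, [:: 0; 1; 2; 3; 4]);
 (0, [:: 0; 1; 2; 3; 4]);
 (5, [:: 1; 0; 3; 4; 2]);
 (1, [:: 0; 1; 3; 4; 2]);
 (5, [:: 1; 2; 3; 0; 4]);
 (4, [:: 3; 0; 2; 4; 1]);
 (4, [:: 2; 1; 3; 0; 4]);
 (4, [:: 1; 2; 3; 0; 4]);
 (4, [:: 0; 3; 2; 4; 1]);
 (5, [:: 2; 1; 3; 0; 4]);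
 (1, [:: 1; 0; 3; 4; 2]);
 (2, [:: 0; 1; 4; 3; 2]);
 (0, [:: 0; 1; 2; 3; 4]);
 (3, [:: 3; 0; 2; 4; 1]);
 (4, [:: 3; 4; 2; 1; 0]);
 (5, [:: 4; 3; 2; 1; 0]);
 (0, [:: 0; 1; 2; 3; 4]);
 (2, [:: 0; 3; 4; 2; 1]);
 (1, [:: 0; 4; 3; 2; 1]);
 (4, [:: 4; 0; 3; 2; 1]);
 (1, [:: 4; 1; 0; 3; 2]);
 (0, [:: 0; 1; 2; 3; 4]);
 (1, [:: 2; 0; 4; 3; 1]);
 (0, [:: 0; 1; 2; 3; 4]);
 (0, [:: 0; 1; 2; 3; 4]);
 (0, [:: 0; 1; 2; 3; 4]);
 (4, [:: 4; 1; 0; 3; 2]);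
 (3, [:: 0; 1; 3; 2; 4]);
 (2, [:: 3; 1; 0; 4; 2]);
 (2, [:: 1; 4; 3; 2; 0]);
 (0, [:: 0; 3; 2; 1; 4]);
 (0, [:: 0; 1; 2; 3; 4]);
 (0, [:: 0; 1; 2; 3; 4]);
 (0, [:: 0; 1; 2; 3; 4]);
 (1, [:: 4; 2; 1; 0; 3]);
 (0, [:: 0; 1; 2; 3; 4]);
 (0, [:: 0; 1; 2; 3; 4]);
 (0, [:: 0; 1; 2; 3; 4]);
 (0, [:: 0; 1; 2; 3; 4]);
 (0, [:: 0; 1; 2; 3; 4]);
 (0, [:: 0; 1; 2; 3; 4]);
 (0, [:: 0; 1; 2; 3; 4]);
 (0, [:: 0; 1; 2; 3; 4]);
 (2, [:: 1; 2; 0; 4; 3]);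
 (5, [:: 3; 0; 4; 2; 1]);
 (3, [:: 0; 2; 4; 1; 3]);
 (2, [:: 4; 2; 1; 0; 3]);
 (0, [:: 0; 1; 2; 3; 4]);
 (0, [:: 0; 1; 2; 3; 4]);
 (4, [:: 4; 2; 1; 0; 3]);
 (1, [:: 2; 1; 0; 4; 3]);
 (1, [:: 2; 4; 3; 1; 0]);
 (0, [:: 0; 2; 1; 4; 3]);
 (0, [:: 0; 1; 2; 3; 4]);
 (2, [:: 4; 1; 0; 3; 2]);
 (0, [:: 0; 1; 2; 3; 4]);
 (2, [:: 1; 3; 2; 0; 4]);
 (0, [:: 0; 1; 2; 3; 4]);
 (3, [:: 0; 4; 1; 3; 2]);
 (2, [:: 4; 0; 3; 2; 1]);
 (1, [:: 3; 0; 4; 2; 1]);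
 (5, [:: 3; 2; 1; 0; 4]);
 (1, [:: 3; 1; 0; 4; 2]);
 (0, [:: 0; 1; 2; 3; 4]);
 (5, [:: 3; 1; 0; 4; 2]);
 (0, [:: 0; 1; 2; 3; 4]);
 (2, [:: 3; 2; 1; 0; 4]);
 (1, [:: 4; 0; 3; 2; 1]);
 (2, [:: 3; 0; 4; 2; 1]);
 (0, [:: 0; 1; 2; 3; 4]);
 (5, [:: 3; 4; 2; 1; 0]);
 (4, [:: 4; 3; 2; 1; 0]);
 (3, [:: 0; 3; 2; 4; 1]);
 (0, [:: 0; 1; 2; 3; 4]);
 (2, [:: 1; 0; 4; 3; 2]);
 (0, [:: 0; 1; 4; 3; 2]);
 (1, [:: 3; 4; 2; 1; 0]);
 (2, [:: 3; 4; 2; 1; 0]);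
 (1, [:: 3; 2; 1; 0; 4]);
 (1, [:: 2; 3; 1; 0; 4]);
 (2, [:: 4; 3; 2; 1; 0]);
 (1, [:: 4; 3; 2; 1; 0]);
 (0, [:: 0; 4; 3; 2; 1])].
Definition matchb (bs : seq bool) (e : nat * seq nat) : bool :=
  let: (c, sg) := e in
  [&& (c < 6)%nat, size sg == 5%nat, uniq sg, all (fun i => i < 5)%nat sg &
   all (fun t => let: (a, b, d) := t in
        signb bs a b d == signb (repbits c) (nth 0%nat sg a) (nth 0%nat sg b) (nth 0%nat sg d)) trips].

Fixpoint bits (k n : nat) : seq bool :=
  if k is k'.+1 then odd n :: bits k' n./2 else [::].

Definition code (bs : seq bool) : nat := foldr (fun (b : bool) n => b + n.*2)%nat 0%nat bs.

Lemma bits_code bs : bits (size bs) (code bs) = bs.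
Proof.
elim: bs => [|b s IH] //=.
rewrite oddD odd_double addbF half_bit_double IH.
by case: b.
Qed.

Definition bigcheck : bool :=
  all (fun n => validb (bits 10 n) ==> matchb (bits 10 n) (nth (0%nat, [::]) table n)) (iota 0 1024).

Lemma bigcheck_ok : bigcheck.
Proof. vm_compute. reflexivity. Qed.
Lemma sort3_alt (g : nat -> nat -> nat -> int) a b c :
  [/\ g a b c = g c a b, g a b c = g b c a, g a b c = - g a c b,
      g a b c = - g b a c & g a b c = - g c b a] ->
  g a b c = (if (sort3 a b c).2 then -1 else 1) *
            g (sort3 a b c).1.1.1 (sort3 a b c).1.1.2 (sort3 a b c).1.2.
Proof.
move=> [A1 A2 A3 A4 A5]; rewrite /sort3.
case: (a < b)%nat; case: (b < c)%nat; case: (a < c)%nat => /=; rewrite ?mul1r ?mulN1r.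
all: first [done | exact: A1 | exact: A2 | exact: A3 | exact: A4 | exact: A5].
Qed.

Lemma trips_spec a b c : (a, b, c) \in trips ->
  [/\ (a < 5)%nat, (b < 5)%nat, (c < 5)%nat & [&& a != b, b != c & a != c]].
Proof.
have H : all (fun t => let: (a, b, c) := t in
   [&& (a < 5)%nat, (b < 5)%nat, (c < 5)%nat, a != b, b != c & a != c]) trips by vm_compute.
by move/(allP H) => /and4P[? ? ? ?].
Qed.

Lemma trips_mem a b c : (a < 5)%nat -> (b < 5)%nat -> (c < 5)%nat -> a != b -> b != c -> a != c ->
  (a, b, c) \in trips.
Proof.
by case: a => [|[|[|[|[|a]]]]] //; case: b => [|[|[|[|[|b]]]]] //; case: c => [|[|[|[|[|c]]]]].
Qed.

Lemma sort3_tri a b c : (a, b, c) \in trips -> (sort3 a b c).1 \in tri.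
Proof.
have H : all (fun t => let: (a, b, c) := t in (sort3 a b c).1 \in tri) trips by vm_compute.
by move/(allP H).
Qed.

Lemma tri_trips x y z : (x, y, z) \in tri -> (x, y, z) \in trips.
Proof.
have H : all (fun t => t \in trips) tri by vm_compute.
by move/(allP H).
Qed.

Lemma quads_spec a b c d : (a, b, c, d) \in quads ->
  [/\ (a, b, c) \in trips, (a, b, d) \in trips, (b, c, d) \in trips & (c, a, d) \in trips].
Proof.
have H : all (fun q => let: (a, b, c, d) := q in
   [&& (a, b, c) \in trips, (a, b, d) \in trips, (b, c, d) \in trips & (c, a, d) \in trips]) quads
  by vm_compute.
by move/(allP H) => /and4P[].
Qed.

Lemma nth_bs (g : nat -> nat -> nat -> int) t : t \in tri ->
  nth false [seq g t.1.1 t.1.2 t.2 == 1 | t <- tri] (index t tri) = (g t.1.1 t.1.2 t.2 == 1).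
Proof. by move=> Ht; rewrite (nth_map (0,0,0)%nat) ?index_mem // nth_index. Qed.

Lemma ext_g (g : nat -> nat -> nat -> int) :
  (forall a b c, (a, b, c) \in trips ->
     (g a b c = 1 \/ g a b c = -1) /\
     [/\ g a b c = g c a b, g a b c = g b c a, g a b c = - g a c b,
         g a b c = - g b a c & g a b c = - g c b a]) ->
  forall a b c, (a, b, c) \in trips ->
    g a b c = ext [seq g t.1.1 t.1.2 t.2 == 1 | t <- tri] a b c.
Proof.
move=> Hg a b c ht.
have Ht := sort3_tri ht.
rewrite (sort3_alt (Hg a b c ht).2) /ext /signb nth_bs //.
case: (sort3 a b c) Ht => [[[x y] z] p] /= Ht.
have [[->|->] _] := Hg x y z (tri_trips Ht); by case: p.
Qed.
Section Geo.
Variable R : realType.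

Definition zR (z : Z) : R := (int_of_Z z)%:~R.

Lemma zRD a b : zR (a + b)%Z = zR a + zR b.
Proof. by rewrite /zR -intrD; congr intmul; lia. Qed.
Lemma zRM a b : zR (a * b)%Z = zR a * zR b.
Proof. by rewrite /zR -intrM; congr intmul; lia. Qed.
Lemma zRN a : zR (- a)%Z = - zR a.
Proof. by rewrite /zR -mulrNz; congr intmul; lia. Qed.
Lemma zRB a b : zR (a - b)%Z = zR a - zR b.
Proof. by rewrite zRD zRN. Qed.
Lemma zR0 : zR 0%Z = 0.
Proof. by []. Qed.
Lemma zR1 : zR 1%Z = 1.
Proof. by []. Qed.
Lemma zR_le a b : (a <=? b)%Z -> zR a <= zR b.
Proof. by move/Z.leb_le => h; rewrite /zR ler_int; lia. Qed.
Lemma zR_lt a b : (a <? b)%Z -> zR a < zR b.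
Proof. by move/Z.ltb_lt => h; rewrite /zR ltr_int; lia. Qed.
Lemma zR_eq a b : (a =? b)%Z -> zR a = zR b.
Proof. by move/Z.eqb_eq => ->. Qed.

Definition satR (c : Z * Z * Z) (x : R * R) : Prop :=
  zR c.1.1 * x.1 + zR c.1.2 * x.2 <= zR c.2.

Definition Kset (cs : seq (Z * Z * Z)) (M : Z) : set (R * R) :=
  [set x | [/\ `|x.1| <= zR M, `|x.2| <= zR M & forall c, c \in cs -> satR c x]].

Lemma hp_convex (a b c : R) (x y : R * R) (t : R) : 0 <= t <= 1 ->
  a * x.1 + b * x.2 <= c -> a * y.1 + b * y.2 <= c ->
  a * ((1 - t) * x.1 + t * y.1) + b * ((1 - t) * x.2 + t * y.2) <= c.
Proof.
move=> /andP[t0 t1] hx hy.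
have -> : a * ((1 - t) * x.1 + t * y.1) + b * ((1 - t) * x.2 + t * y.2) =
  (1 - t) * (a * x.1 + b * x.2) + t * (a * y.1 + b * y.2) by ring.
have -> : c = (1 - t) * c + t * c by ring.
apply: lerD; apply: ler_wpM2l => //; lra.
Qed.

Lemma Kset_convex cs M : convex_plane (Kset cs M).
Proof.
move=> x y [x1 x2 xc] [y1 y2 yc] t ht; split => /=.
- move: x1 y1; rewrite !ler_norml => /andP[a1 a2] /andP[b1 b2].
  have := @hp_convex 1 0 (zR M) x y t ht; rewrite !mul1r !mul0r !addr0 => h.
  have := @hp_convex (-1) 0 (zR M) x y t ht; rewrite !mulN1r !mul0r !addr0 => h'.
  apply/andP; split; last by apply: h.
  by rewrite lerNl; apply: h'; rewrite lerNl.
- move: x2 y2; rewrite !ler_norml => /andP[a1 a2] /andP[b1 b2].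
  have := @hp_convex 0 1 (zR M) x y t ht; rewrite !mul1r !mul0r !add0r => h.
  have := @hp_convex 0 (-1) (zR M) x y t ht; rewrite !mulN1r !mul0r !add0r => h'.
  apply/andP; split; last by apply: h.
  by rewrite lerNl; apply: h'; rewrite lerNl.
- by move=> c hc; apply: hp_convex => //; [apply: xc | apply: yc].
Qed.

Lemma hp_closed (a b c : R) : closed [set x : R * R | a * x.1 + b * x.2 <= c].
Proof.
have -> : [set x : R * R | a * x.1 + b * x.2 <= c] =
  (fun x : R * R => a * x.1 + b * x.2) @^-1` [set r | r <= c] by [].
apply: preimage_closed; last exact: closed_le.
move=> x _; apply: cvgD.
  by apply: cvgMr; apply: cvg_fst.
by apply: cvgMr; apply: cvg_snd.
Qed.


Lemma Kset_closed cs M : closed (Kset cs M).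
Proof.
have -> : Kset cs M = [set x | 1 * x.1 + 0 * x.2 <= zR M] `&` [set x | (-1) * x.1 + 0 * x.2 <= zR M]
   `&` [set x | 0 * x.1 + 1 * x.2 <= zR M] `&` [set x | 0 * x.1 + (-1) * x.2 <= zR M]
   `&` \bigcap_(c in [set c | c \in cs]) [set x | zR c.1.1 * x.1 + zR c.1.2 * x.2 <= zR c.2].
  rewrite /Kset; apply/funext => x /=; apply/propext; rewrite /= !mul1r !mul0r !mulN1r !addr0 !add0r.
  rewrite !ler_norml; split.
  - case=> /andP[? ?] /andP[? ?] hc; split; last by move=> c /= hc'; apply: hc.
    by do 3?split => //; rewrite lerNl.
  - case=> [[[[h1 h2] h3] h4] hc]; split; last by move=> c hc'; apply: hc.
    + by apply/andP; split => //; rewrite lerNl.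
    + by apply/andP; split => //; rewrite lerNl.
apply: closedI; last by apply: closed_bigI => c _; apply: hp_closed.
apply: closedI; last by apply: hp_closed.
apply: closedI; last by apply: hp_closed.
by apply: closedI; apply: hp_closed.
Qed.

Lemma Kset_compact cs M : compact (Kset cs M).
Proof.
have hB := compact_setX (@segment_compact R (- zR M) (zR M)) (@segment_compact R (- zR M) (zR M)).
apply: (subclosed_compact (@Kset_closed cs M) hB).
by move=> x [h1 h2 _]; split => /=; rewrite in_itv /= -ler_norml.
Qed.

End Geo.
Definition inK (cs : seq (Z * Z * Z)) (M : Z) (w : Z * Z) : bool :=
  [&& (- M <=? w.1)%Z, (w.1 <=? M)%Z, (- M <=? w.2)%Z, (w.2 <=? M)%Z &
      all (fun c : Z * Z * Z => (c.1.1 * w.1 + c.1.2 * w.2 <=? c.2)%Z) cs].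

Definition cert := (nat * nat * Z * Z * Z)%type.
Definition c0 : Z * Z * Z := (0%Z, 0%Z, 0%Z).
Definition certok (cs : seq (Z * Z * Z)) (e1 e2 t : Z) (ct : cert) : bool :=
  let: (i1, i2, l1, l2, k) := ct in
  [&& (0 <=? l1)%Z, (0 <=? l2)%Z, (0 <? k)%Z,
      (l1 * (nth c0 cs i1).1.1 + l2 * (nth c0 cs i2).1.1 =? k * e1)%Z,
      (l1 * (nth c0 cs i1).1.2 + l2 * (nth c0 cs i2).1.2 =? k * e2)%Z &
      (l1 * (nth c0 cs i1).2 + l2 * (nth c0 cs i2).2 <=? k * t)%Z].

Definition pdata := ((Z * Z) * (Z * Z * Z * Z) * seq cert)%type.
Definition dcert : cert := (0%nat, 0%nat, 0%Z, 0%Z, 0%Z).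
Definition checkpair (cu cv : seq (Z * Z * Z)) (M : Z) (pd : pdata) : bool :=
  let: (w, (t1, t2, t3, t4), cts) := pd in
  [&& inK cu M w, inK cv M w,
      certok (cu ++ cv) 1 0 t1 (nth dcert cts 0), certok (cu ++ cv) (-1) 0 t2 (nth dcert cts 1),
      certok (cu ++ cv) 0 1 t3 (nth dcert cts 2) & certok (cu ++ cv) 0 (-1) t4 (nth dcert cts 3)].
Definition pbox (pd : pdata) : Z * Z * Z * Z :=
  let: (_, (t1, t2, t3, t4), _) := pd in ((- t2)%Z, t1, (- t4)%Z, t3).

Definition detZ (x1 x2 y1 y2 z1 z2 : Z) : Z :=
  ((y1 - x1) * (z2 - x2) - (y2 - x2) * (z1 - x1))%Z.
Definition sgnok (sb : bool) (d : Z) : bool := if sb then (0 <? d)%Z else (d <? 0)%Z.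
Definition checktri (sb : bool) (bx by_ bz : Z * Z * Z * Z) : bool :=
  let: (xa, xb, xc, xd) := bx in let: (ya, yb, yc, yd) := by_ in let: (za, zb, zc, zd) := bz in
  all (fun x1 => all (fun x2 => all (fun y1 => all (fun y2 => all (fun z1 => all (fun z2 =>
     sgnok sb (detZ x1 x2 y1 y2 z1 z2)) [:: zc; zd]) [:: za; zb]) [:: yc; yd]) [:: ya; yb])
     [:: xc; xd]) [:: xa; xb].

Definition pairs10 : seq (nat * nat) :=
  [:: (0,1); (0,2); (0,3); (0,4); (1,2); (1,3); (1,4); (2,3); (2,4); (3,4)]%nat.
Definition pidx (u v : nat) : nat := index (minn u v, maxn u v) pairs10.
Definition dpd : pdata := ((0%Z, 0%Z), (0%Z, 0%Z, 0%Z, 0%Z), [::]).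

Definition checkclass (C : seq (seq (Z * Z * Z))) (M : Z) (P : seq pdata) (rb : seq bool) : bool :=
  all (fun p => checkpair (nth [::] C p.1) (nth [::] C p.2) M (nth dpd P (pidx p.1 p.2))) pairs10 &&
  all (fun t => let: (u, v, w) := t in
         checktri (signb rb u v w) (pbox (nth dpd P (pidx v w))) (pbox (nth dpd P (pidx u w)))
                  (pbox (nth dpd P (pidx u v)))) trips.
Section Sound.
Variable R : realType.

Local Notation zR := (@zR R).

Lemma zRm1 : zR (-1)%Z = -1.
Proof. by []. Qed.

Lemma inK_sound cs M w : inK cs M w -> Kset cs M (zR w.1, zR w.2).
Proof.
case/and5P => h1 h2 h3 h4 /allP h5; split => /=.
- by rewrite ler_norml -zRN; apply/andP; split; apply: (@zR_le R).
- by rewrite ler_norml -zRN; apply/andP; split; apply: (@zR_le R).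
- by move=> c /h5 hc; rewrite /satR /= -!zRM -zRD; apply: (@zR_le R).
Qed.

Lemma sat_nth cs (x : R * R) i : (forall c, c \in cs -> satR c x) -> satR (nth c0 cs i) x.
Proof.
move=> H; case: (ltnP i (size cs)) => hi; first by apply: H; rewrite mem_nth.
by rewrite nth_default // /satR /= !zR0 !mul0r addr0.
Qed.

Lemma certok_sound cs e1 e2 t ct (x : R * R) : certok cs e1 e2 t ct ->
  (forall c, c \in cs -> satR c x) -> zR e1 * x.1 + zR e2 * x.2 <= zR t.
Proof.
case: ct => [[[[i1 i2] l1] l2] k] /=; case/and5P => hl1 hl2 hk he1 /andP[he2 hb] H.
have s1 := @sat_nth cs x i1 H; have s2 := @sat_nth cs x i2 H.
move: hl1 hl2 hk hb => /(@zR_le R _ _) hl1 /(@zR_le R _ _) hl2 /(@zR_lt R _ _) hk /(@zR_le R _ _) hb.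
move: he1 he2 => /(@zR_eq R _ _) he1 /(@zR_eq R _ _) he2.
rewrite !zR0 in hl1 hl2 hk; rewrite !zRD !zRM in he1 he2 hb.
move: s1 s2; rewrite /satR => s1 s2.
rewrite -(ler_pM2l hk) mulrDr !mulrA -he1 -he2.
set a11 := zR (nth c0 cs i1).1.1; set a12 := zR (nth c0 cs i1).1.2.
set a21 := zR (nth c0 cs i2).1.1; set a22 := zR (nth c0 cs i2).1.2.
set b1 := zR (nth c0 cs i1).2; set b2 := zR (nth c0 cs i2).2.
rewrite -/a11 -/a12 -/b1 in s1; rewrite -/a21 -/a22 -/b2 in s2.
have -> : (zR l1 * a11 + zR l2 * a21) * x.1 + (zR l1 * a12 + zR l2 * a22) * x.2 =
  zR l1 * (a11 * x.1 + a12 * x.2) + zR l2 * (a21 * x.1 + a22 * x.2) by ring.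
apply: le_trans hb; apply: lerD; exact: ler_wpM2l.
Qed.

Definition inbox (b : Z * Z * Z * Z) (x : R * R) : Prop :=
  [/\ zR b.1.1.1 <= x.1, x.1 <= zR b.1.1.2, zR b.1.2 <= x.2 & x.2 <= zR b.2].

Lemma checkpair_sound cu cv M pd : checkpair cu cv M pd ->
  (Kset cu M `&` Kset cv M) (zR pd.1.1.1, zR pd.1.1.2) /\
  forall x, Kset cu M x -> Kset cv M x -> inbox (pbox pd) x.
Proof.
case: pd => [[w [[[t1 t2] t3] t4]] cts] /=; case/and5P => hu hv c1 c2 /andP[c3 c4]; split.
  by split; apply: inK_sound.
move=> x [_ _ Hu] [_ _ Hv].
have H : forall c, c \in cu ++ cv -> satR c x.
  by move=> c; rewrite mem_cat => /orP[]; [apply: Hu | apply: Hv].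
have := certok_sound c1 H; rewrite zR1 zR0 mul1r mul0r addr0 => h1.
have := certok_sound c2 H; rewrite zRm1 zR0 mulN1r mul0r addr0 => h2.
have := certok_sound c3 H; rewrite zR1 zR0 mul1r mul0r add0r => h3.
have := certok_sound c4 H; rewrite zRm1 zR0 mulN1r mul0r add0r => h4.
by split => //=; rewrite zRN lerNl.
Qed.

Lemma affpos (al be a b t : R) : a <= t -> t <= b ->
  0 < al + be * a -> 0 < al + be * b -> 0 < al + be * t.
Proof.
move=> hat htb ha hb; case: (lerP 0 be) => hbe.
  by apply: (lt_le_trans ha); rewrite lerD2l; apply: ler_wpM2l.
by apply: (lt_le_trans hb); rewrite lerD2l; apply: ler_wnM2l => //; apply: ltW.
Qed.

Lemma box2 (f : R -> R -> R) (a b c d p1 p2 : R) :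
  (forall u v, f u v = f 0 0 + (f 1 0 - f 0 0) * u + (f 0 1 - f 0 0) * v) ->
  a <= p1 -> p1 <= b -> c <= p2 -> p2 <= d ->
  0 < f a c -> 0 < f a d -> 0 < f b c -> 0 < f b d -> 0 < f p1 p2.
Proof.
move=> hf h1 h2 h3 h4 hac had hbc hbd.
set al0 := f 0 0; set be1 := f 1 0 - f 0 0; set be2 := f 0 1 - f 0 0.
have g : forall u v, f u v = (al0 + be1 * u) + be2 * v.
  by move=> u v; rewrite hf.
rewrite g; apply: (affpos h3 h4); rewrite -g.
- rewrite g addrAC; apply: (affpos h1 h2); rewrite addrAC -g //.
- rewrite g addrAC; apply: (affpos h1 h2); rewrite addrAC -g //.
Qed.

Definition sR (sb : bool) : R := if sb then 1 else -1.
Definition detR (x y z : R * R) : R :=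
  (y.1 - x.1) * (z.2 - x.2) - (y.2 - x.2) * (z.1 - x.1).

Lemma checktri_sound sb bx by_ bz (x y z : R * R) : checktri sb bx by_ bz ->
  inbox bx x -> inbox by_ y -> inbox bz z -> 0 < sR sb * detR x y z.
Proof.
case: bx => [[[xa xb] xc] xd]; case: by_ => [[[ya yb] yc] yd]; case: bz => [[[za zb] zc] zd].
rewrite /checktri => H [/= hx1 hx2 hx3 hx4] [/= hy1 hy2 hy3 hy4] [/= hz1 hz2 hz3 hz4].
have H0 : forall x1 x2 y1 y2 z1 z2, x1 \in [:: xa; xb] -> x2 \in [:: xc; xd] ->
    y1 \in [:: ya; yb] -> y2 \in [:: yc; yd] -> z1 \in [:: za; zb] -> z2 \in [:: zc; zd] ->
    0 < sR sb * detR (zR x1, zR x2) (zR y1, zR y2) (zR z1, zR z2).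
  move=> x1 x2 y1 y2 z1 z2 i1 i2 i3 i4 i5 i6.
  move/allP/(_ x1 i1)/allP/(_ x2 i2)/allP/(_ y1 i3)/allP/(_ y2 i4)/allP/(_ z1 i5)/allP/(_ z2 i6): H.
  rewrite /sgnok /sR /detR /=; case: sb => /=.
    by move/(@zR_lt R _ _); rewrite zR0 /detZ !zRB !zRM !zRB mul1r.
  by move/(@zR_lt R _ _); rewrite zR0 /detZ !zRB !zRM !zRB mulN1r oppr_gt0.
have in1 (p q : Z) : p \in [:: p; q] by rewrite mem_head.
have in2 (p q : Z) : q \in [:: p; q] by rewrite !inE eqxx orbT.
have S1 : forall x1 x2 y1 y2, x1 \in [:: xa; xb] -> x2 \in [:: xc; xd] ->
    y1 \in [:: ya; yb] -> y2 \in [:: yc; yd] ->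
    0 < sR sb * detR (zR x1, zR x2) (zR y1, zR y2) z.
  move=> x1 x2 y1 y2 i1 i2 i3 i4.
  have := @box2 (fun u v => sR sb * detR (zR x1, zR x2) (zR y1, zR y2) (u, v))
    (zR za) (zR zb) (zR zc) (zR zd) z.1 z.2.
  case: z {hz1 hz2 hz3 hz4} (hz1) (hz2) (hz3) (hz4) => z1 z2 /= hz1' hz2' hz3' hz4'.
  apply => //; try by apply: H0.
  by move=> u v; rewrite /detR /=; ring.
have S2 : forall x1 x2, x1 \in [:: xa; xb] -> x2 \in [:: xc; xd] ->
    0 < sR sb * detR (zR x1, zR x2) y z.
  move=> x1 x2 i1 i2.
  have := @box2 (fun u v => sR sb * detR (zR x1, zR x2) (u, v) z)
    (zR ya) (zR yb) (zR yc) (zR yd) y.1 y.2.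
  case: y {hy1 hy2 hy3 hy4} (hy1) (hy2) (hy3) (hy4) => y1 y2 /= hy1' hy2' hy3' hy4'.
  apply => //; try by apply: S1.
  by move=> u v; rewrite /detR /=; ring.
have := @box2 (fun u v => sR sb * detR (u, v) y z)
    (zR xa) (zR xb) (zR xc) (zR xd) x.1 x.2.
case: x {hx1 hx2 hx3 hx4} (hx1) (hx2) (hx3) (hx4) => x1 x2 /= hx1' hx2' hx3' hx4'.
apply => //; try by apply: S2.
by move=> u v; rewrite /detR /=; ring.
Qed.

End Sound.
Lemma pair_mem u v : (u < 5)%nat -> (v < 5)%nat -> (u < v)%nat -> (u, v) \in pairs10.
Proof.
by case: u => [|[|[|[|[|u]]]]] //; case: v => [|[|[|[|[|v]]]]].
Qed.

Section ClassSound.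
Variable R : realType.

Lemma class_pair C M P rb u v : checkclass C M P rb ->
  (u < 5)%nat -> (v < 5)%nat -> u != v ->
  (@Kset R (nth [::] C u) M `&` Kset (nth [::] C v) M) !=set0 /\
  forall x, @Kset R (nth [::] C u) M x -> Kset (nth [::] C v) M x ->
     inbox (pbox (nth dpd P (pidx u v))) x.
Proof.
case/andP => /allP Hp _.
wlog huv : u v / (u < v)%nat.
  move=> W hu hv; rewrite neq_ltn => /orP[h|h]; first by apply: W => //; rewrite ltn_eqF.
  have [[p hp] hb] := W v u h hv hu (negbT (ltn_eqF h)).
  split; first by exists p; case: hp.
  by move=> x hxu hxv; rewrite /pidx minnC maxnC; apply: hb.
move=> hu hv _.
have := Hp _ (pair_mem hu hv huv) => /=.
rewrite /pidx (minn_idPl (ltnW huv)) (maxn_idPr (ltnW huv)) => /(@checkpair_sound R) [hw hb].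
split; first by exists (zR R (nth dpd P (index (u, v) pairs10)).1.1.1, zR R (nth dpd P (index (u, v) pairs10)).1.1.2).
exact: hb.
Qed.

Lemma class_tri C M P rb u v w : checkclass C M P rb -> (u, v, w) \in trips ->
  let K := fun n => @Kset R (nth [::] C n) M in
  K u `&` K v `&` K w = set0 /\ family_orient_is (K u) (K v) (K w) (ext rb u v w).
Proof.
move=> Hc ht K.
have [hu hv hw /and3P[huv hvw huw]] := trips_spec ht.
have Hcl := Hc; case/andP: Hcl => _ /allP/(_ _ ht) /= Ht.
have Bvw := (class_pair Hc hv hw hvw).2.
have Buw := (class_pair Hc hu hw huw).2.
have Buv := (class_pair Hc hu hv huv).2.
have key : forall x y z, (K v `&` K w) x -> (K u `&` K w) y -> (K u `&` K v) z ->
    0 < sR R (signb rb u v w) * detR x y z.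
  move=> x y z [xv xw] [yu yw] [zu zv].
  by apply: (checktri_sound Ht); [apply: Bvw | apply: Buw | apply: Buv].
split.
  apply/seteqP; split; last exact: sub0set.
  move=> p [[pu pv] pw].
  have := key p p p (conj pv pw) (conj pu pw) (conj pu pv).
  by rewrite /detR !subrr ?mul0r ?subrr mulr0 ltxx.
move=> x y z hx hy hz; have := key x y z hx hy hz.
rewrite /orient /ext /sR -/(detR x y z).
case: (signb rb u v w) => /=; rewrite ?mul1r ?mulN1r ?oppr_gt0 => h.
  exact: gtr0_sgz.
exact: ltr0_sgz.
Qed.

End ClassSound.
Definition cons0 : seq (seq (Z*Z*Z)) := [:: [:: ((-81)%Z, (-10)%Z, (-466)%Z); (1%Z, (-2)%Z, 10%Z); (38%Z, (-3)%Z, 307%Z); ((-34)%Z, 21%Z, 1795%Z)]; [:: ((-47)%Z, (-5)%Z, (-1036)%Z); ((-88)%Z, (-123)%Z, 4424%Z); (221%Z, 97%Z, 19403%Z); (8%Z, 41%Z, 3589%Z)]; [:: ((-52)%Z, (-25)%Z, 448%Z); (39%Z, (-25)%Z, 2814%Z); (13%Z, 15%Z, 168%Z)]; [:: (7%Z, (-74)%Z, (-998)%Z); (18%Z, (-71)%Z, (-777)%Z); ((-5)%Z, 29%Z, 522%Z)]; [:: ((-29)%Z, (-26)%Z, 1862%Z); (10%Z, (-37)%Z, (-734)%Z); (47%Z, (-63)%Z, (-2119)%Z); ((-2)%Z, 9%Z, 463%Z)]].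
Definition M0 : Z := 151%Z.
Definition pd0 : seq pdata := [:: ((14%Z, 82%Z), (15%Z, (-13)%Z, 85%Z, (-75)%Z), [:: (2, 7, 41%Z, 3%Z, 1582%Z); (7, 4, 5%Z, 41%Z, 1887%Z); (7, 4, 47%Z, 8%Z, 1887%Z); (4, 2, 38%Z, 47%Z, 331%Z)]);
 ((7%Z, 2%Z), (9%Z, (-4)%Z, 7%Z, 2%Z), [:: (2, 6, 15%Z, 3%Z, 609%Z); (6, 0, 10%Z, 15%Z, 1085%Z); (6, 0, 81%Z, 13%Z, 1085%Z); (0, 1, 1%Z, 81%Z, 172%Z)]);
 ((7%Z, 17%Z), (10%Z, (-3)%Z, 20%Z, (-13)%Z), [:: (2, 6, 29%Z, 3%Z, 1087%Z); (6, 0, 10%Z, 29%Z, 2399%Z); (2, 6, 5%Z, 38%Z, 1087%Z); (0, 4, 7%Z, 81%Z, 6064%Z)]);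
 ((6%Z, 46%Z), (13%Z, 1%Z, 55%Z, (-34)%Z), [:: (2, 7, 9%Z, 3%Z, 336%Z); (7, 0, 10%Z, 9%Z, 749%Z); (2, 7, 2%Z, 38%Z, 336%Z); (0, 6, 47%Z, 81%Z, 5573%Z)]);
 ((34%Z, (-39)%Z), (51%Z, (-22)%Z, (-8)%Z, 61%Z), [:: (5, 6, 15%Z, 25%Z, 910%Z); (6, 0, 5%Z, 15%Z, 640%Z); (6, 0, 47%Z, 13%Z, 640%Z); (1, 5, 39%Z, 88%Z, 6997%Z)]);
 ((47%Z, 25%Z), (75%Z, (-19)%Z, 31%Z, (-16)%Z), [:: (5, 2, 97%Z, 71%Z, 17437%Z); (6, 0, 5%Z, 29%Z, 1388%Z); (2, 6, 5%Z, 221%Z, 6894%Z); (0, 5, 18%Z, 47%Z, 3427%Z)]);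
 ((22%Z, 53%Z), (34%Z, (-16)%Z, 59%Z, (-46)%Z), [:: (6, 7, 9%Z, 63%Z, 297%Z); (7, 0, 5%Z, 9%Z, 433%Z); (6, 7, 2%Z, 47%Z, 297%Z); (0, 6, 47%Z, 47%Z, 3196%Z)]);
 (((-10)%Z, 14%Z), ((-2)%Z, 16%Z, 17%Z, (-12)%Z), [:: (3, 2, 15%Z, 74%Z, 1067%Z); (5, 0, 25%Z, 29%Z, 1633%Z); (2, 5, 5%Z, 13%Z, 452%Z); (0, 3, 7%Z, 52%Z, 4023%Z)]);
 (((-19)%Z, 25%Z), ((-13)%Z, 24%Z, 32%Z, (-20)%Z), [:: (5, 2, 15%Z, 63%Z, 1524%Z); (2, 0, 25%Z, 15%Z, 455%Z); (2, 0, 52%Z, 13%Z, 455%Z); (0, 5, 47%Z, 52%Z, 4451%Z)]);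
 (((-38)%Z, 11%Z), ((-27)%Z, 58%Z, 14%Z, (-8)%Z), [:: (5, 2, 29%Z, 63%Z, 1048%Z); (2, 0, 74%Z, 29%Z, 167%Z); (5, 2, 5%Z, 47%Z, 1048%Z); (2, 0, 7%Z, 5%Z, 167%Z)])].
Definition cons1 : seq (seq (Z*Z*Z)) := [:: [:: ((-111)%Z, (-157)%Z, 7177%Z); (26%Z, (-31)%Z, 6113%Z); (7%Z, 281%Z, (-1537)%Z)]; [:: (7%Z, (-61)%Z, 196%Z); (1%Z, (-3)%Z, 28%Z); ((-79)%Z, 317%Z, 2988%Z)]; [:: ((-161)%Z, (-6)%Z, (-3849)%Z); (247%Z, (-28)%Z, 8993%Z); ((-43)%Z, 17%Z, 423%Z)]; [:: ((-99)%Z, (-113)%Z, (-9086)%Z); (53%Z, 26%Z, 6382%Z); ((-12)%Z, 7%Z, 37%Z)]; [:: ((-105)%Z, (-83)%Z, (-15622)%Z); ((-7)%Z, (-6)%Z, (-1062)%Z); (80%Z, (-11)%Z, 14206%Z); (95%Z, 154%Z, 25891%Z)]].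
Definition M1 : Z := 223%Z.
Definition pd1 : seq pdata := [:: (((-45)%Z, (-6)%Z), ((-16)%Z, 58%Z, (-4)%Z, 10%Z), [:: (3, 2, 281%Z, 61%Z, 2394%Z); (5, 0, 157%Z, 317%Z, 47590%Z); (2, 5, 79%Z, 7%Z, 24418%Z); (0, 3, 7%Z, 111%Z, 7870%Z)]);
 ((29%Z, (-36)%Z), (36%Z, (-24)%Z, (-6)%Z, 67%Z), [:: (4, 2, 281%Z, 28%Z, 69603%Z); (2, 3, 6%Z, 281%Z, 45199%Z); (2, 3, 161%Z, 7%Z, 45199%Z); (0, 4, 247%Z, 111%Z, 41887%Z)]);
 ((123%Z, (-20)%Z), (142%Z, (-100)%Z, (-7)%Z, 44%Z), [:: (3, 4, 26%Z, 113%Z, 3415%Z); (2, 3, 113%Z, 281%Z, 27028%Z); (2, 3, 99%Z, 7%Z, 27028%Z); (3, 4, 53%Z, 99%Z, 3415%Z)]);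
 ((170%Z, (-15)%Z), (177%Z, (-159)%Z, (-9)%Z, 26%Z), [:: (5, 2, 281%Z, 11%Z, 22557%Z); (2, 4, 6%Z, 281%Z, 1925%Z); (2, 4, 7%Z, 7%Z, 1925%Z); (4, 5, 80%Z, 7%Z, 557%Z)]);
 ((30%Z, 7%Z), (39%Z, (-23)%Z, 20%Z, 1%Z), [:: (4, 2, 317%Z, 28%Z, 76087%Z); (2, 3, 6%Z, 317%Z, 51511%Z); (4, 2, 79%Z, 247%Z, 76087%Z); (3, 0, 7%Z, 161%Z, 9863%Z)]);
 ((87%Z, 26%Z), (108%Z, (-63)%Z, 36%Z, (-15)%Z), [:: (1, 4, 26%Z, 3%Z, 185%Z); (2, 3, 113%Z, 317%Z, 40310%Z); (4, 2, 79%Z, 53%Z, 18855%Z); (3, 1, 1%Z, 99%Z, 410%Z)]);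
 ((159%Z, 46%Z), (185%Z, (-118)%Z, 56%Z, (-32)%Z), [:: (5, 6, 154%Z, 11%Z, 13365%Z); (2, 4, 6%Z, 317%Z, 2693%Z); (6, 2, 79%Z, 95%Z, 42281%Z); (4, 1, 1%Z, 7%Z, 27%Z)]);
 ((39%Z, 61%Z), (46%Z, (-29)%Z, 85%Z, (-44)%Z), [:: (1, 5, 7%Z, 28%Z, 1393%Z); (5, 3, 113%Z, 7%Z, 2049%Z); (1, 5, 12%Z, 247%Z, 1393%Z); (3, 1, 247%Z, 99%Z, 30683%Z)]);
 ((48%Z, 134%Z), (52%Z, (-43)%Z, 141%Z, (-124)%Z), [:: (1, 6, 154%Z, 28%Z, 40698%Z); (2, 3, 83%Z, 17%Z, 5354%Z); (6, 2, 43%Z, 95%Z, 8237%Z); (3, 1, 247%Z, 105%Z, 23441%Z)]);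
 ((66%Z, 107%Z), (75%Z, (-61)%Z, 115%Z, (-94)%Z), [:: (3, 1, 26%Z, 83%Z, 1669%Z); (2, 3, 83%Z, 7%Z, 1731%Z); (1, 2, 12%Z, 53%Z, 683%Z); (3, 1, 53%Z, 105%Z, 1669%Z)])].
Definition cons2 : seq (seq (Z*Z*Z)) := [:: [:: (75%Z, (-47)%Z, 2631%Z); (213%Z, (-98)%Z, 5769%Z); (10%Z, (-1)%Z, 865%Z); ((-44)%Z, 21%Z, (-735)%Z)]; [:: ((-295)%Z, (-34)%Z, 22302%Z); ((-394)%Z, (-99)%Z, 20301%Z); (689%Z, 133%Z, (-26794)%Z)]; [:: ((-402)%Z, (-373)%Z, (-50116)%Z); (79%Z, (-22)%Z, 22619%Z); (317%Z, 375%Z, 65282%Z); (3%Z, 10%Z, 2308%Z)]; [:: ((-11)%Z, (-41)%Z, 1177%Z); (153%Z, 451%Z, 685%Z); ((-21)%Z, 41%Z, 935%Z)]; [:: ((-19)%Z, (-94)%Z, (-187)%Z); (3%Z, (-101)%Z, (-318)%Z); (9%Z, 191%Z, 4974%Z); ((-8)%Z, 15%Z, 1122%Z)]].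
Definition M2 : Z := 472%Z.
Definition pd2 : seq pdata := [:: (((-25)%Z, (-91)%Z), ((-21)%Z, 28%Z, (-82)%Z, 99%Z), [:: (0, 6, 133%Z, 47%Z, 42358%Z); (3, 5, 99%Z, 21%Z, 12630%Z); (6, 3, 44%Z, 689%Z, 20321%Z); (5, 0, 75%Z, 394%Z, 25943%Z)]);
 ((65%Z, 92%Z), (78%Z, (-53)%Z, 114%Z, (-70)%Z), [:: (1, 6, 375%Z, 98%Z, 110941%Z); (3, 4, 373%Z, 21%Z, 24854%Z); (6, 3, 44%Z, 317%Z, 23157%Z); (4, 1, 213%Z, 402%Z, 118845%Z)]);
 ((14%Z, (-18)%Z), (25%Z, (-2)%Z, (-3)%Z, 33%Z), [:: (1, 5, 451%Z, 98%Z, 111057%Z); (3, 4, 41%Z, 21%Z, 2035%Z); (5, 3, 44%Z, 153%Z, 23057%Z); (4, 1, 213%Z, 11%Z, 9811%Z)]);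
 ((29%Z, 14%Z), (39%Z, (-18)%Z, 25%Z, (-3)%Z), [:: (1, 6, 191%Z, 98%Z, 41565%Z); (3, 5, 101%Z, 21%Z, 4381%Z); (6, 3, 44%Z, 9%Z, 8593%Z); (3, 5, 3%Z, 44%Z, 4381%Z)]);
 (((-96)%Z, 248%Z), ((-81)%Z, 106%Z, 263%Z, (-222)%Z), [:: (3, 2, 133%Z, 373%Z, 203531%Z); (6, 0, 34%Z, 10%Z, 2848%Z); (6, 0, 295%Z, 3%Z, 2848%Z); (3, 2, 689%Z, 402%Z, 203531%Z)]);
 (((-43)%Z, (-9)%Z), ((-35)%Z, 51%Z, 3%Z, 20%Z), [:: (3, 2, 133%Z, 41%Z, 26786%Z); (5, 1, 99%Z, 41%Z, 18233%Z); (2, 5, 21%Z, 689%Z, 31042%Z); (3, 2, 689%Z, 11%Z, 26786%Z)]);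
 (((-50)%Z, 20%Z), ((-40)%Z, 59%Z, 29%Z, (-10)%Z), [:: (3, 2, 133%Z, 94%Z, 62239%Z); (5, 1, 99%Z, 191%Z, 74363%Z); (5, 1, 394%Z, 9%Z, 74363%Z); (3, 2, 689%Z, 19%Z, 62239%Z)]);
 ((226%Z, (-82)%Z), (262%Z, (-179)%Z, (-59)%Z, 99%Z), [:: (1, 5, 451%Z, 22%Z, 38995%Z); (5, 0, 373%Z, 451%Z, 124233%Z); (5, 0, 402%Z, 153%Z, 124233%Z); (4, 1, 79%Z, 11%Z, 3481%Z)]);
 ((151%Z, 14%Z), (196%Z, (-105)%Z, 22%Z, (-6)%Z), [:: (5, 2, 375%Z, 101%Z, 33142%Z); (6, 0, 373%Z, 191%Z, 73425%Z); (6, 0, 402%Z, 9%Z, 73425%Z); (0, 5, 3%Z, 402%Z, 41721%Z)]);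
 (((-16)%Z, 6%Z), ((-4)%Z, 30%Z, 10%Z, (-3)%Z), [:: (4, 1, 451%Z, 101%Z, 16806%Z); (2, 3, 94%Z, 41%Z, 2753%Z); (1, 2, 21%Z, 153%Z, 15744%Z); (3, 4, 3%Z, 19%Z, 2201%Z)])].
Definition cons3 : seq (seq (Z*Z*Z)) := [:: [:: ((-164)%Z, (-3)%Z, (-3033)%Z); (91%Z, (-137)%Z, (-2061)%Z); (73%Z, 140%Z, 27835%Z)]; [:: (143%Z, (-263)%Z, 27007%Z); (130%Z, 57%Z, 31658%Z); ((-273)%Z, 206%Z, (-16324)%Z)]; [:: ((-62)%Z, (-111)%Z, (-9874)%Z); ((-35)%Z, (-68)%Z, (-5873)%Z); (40%Z, 57%Z, 6277%Z); (17%Z, 65%Z, 6786%Z)]; [:: (23%Z, (-108)%Z, (-1693)%Z); (29%Z, (-108)%Z, (-2191)%Z); (41%Z, (-105)%Z, (-1810)%Z); ((-31)%Z, 107%Z, 3246%Z)]; [:: ((-151)%Z, (-103)%Z, 14021%Z); (169%Z, (-18)%Z, 301%Z); ((-187)%Z, 139%Z, 25627%Z)]].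
Definition M3 : Z := 233%Z.
Definition pd3 : seq pdata := [:: ((149%Z, 116%Z), (155%Z, (-142)%Z, 121%Z, (-109)%Z), [:: (1, 2, 140%Z, 137%Z, 22741%Z); (5, 1, 137%Z, 206%Z, 18655%Z); (2, 5, 273%Z, 73%Z, 53258%Z); (5, 1, 91%Z, 273%Z, 18655%Z)]);
 ((45%Z, 70%Z), (70%Z, (-16)%Z, 99%Z, (-55)%Z), [:: (1, 5, 57%Z, 137%Z, 10667%Z); (5, 0, 3%Z, 57%Z, 9228%Z); (5, 0, 164%Z, 40%Z, 9228%Z); (4, 1, 91%Z, 35%Z, 10983%Z)]);
 ((26%Z, 35%Z), (41%Z, (-17)%Z, 43%Z, (-27)%Z), [:: (1, 6, 107%Z, 137%Z, 5490%Z); (6, 0, 3%Z, 107%Z, 17641%Z); (1, 6, 31%Z, 91%Z, 5490%Z); (0, 1, 91%Z, 164%Z, 22741%Z)]);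
 ((18%Z, 171%Z), (22%Z, (-15)%Z, 191%Z, (-133)%Z), [:: (4, 2, 140%Z, 18%Z, 24974%Z); (2, 0, 3%Z, 140%Z, 22741%Z); (2, 0, 164%Z, 73%Z, 22741%Z); (0, 4, 169%Z, 164%Z, 3459%Z)]);
 ((103%Z, 35%Z), (127%Z, (-90)%Z, 45%Z, (-21)%Z), [:: (4, 5, 57%Z, 68%Z, 725%Z); (2, 4, 68%Z, 206%Z, 25774%Z); (5, 2, 273%Z, 40%Z, 23801%Z); (4, 5, 40%Z, 35%Z, 725%Z)]);
 ((113%Z, 62%Z), (130%Z, (-103)%Z, 68%Z, (-57)%Z), [:: (5, 6, 107%Z, 105%Z, 1132%Z); (2, 5, 105%Z, 206%Z, 20219%Z); (5, 6, 31%Z, 41%Z, 1132%Z); (2, 5, 41%Z, 273%Z, 20219%Z)]);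
 (((-14)%Z, (-104)%Z), ((-7)%Z, 21%Z, (-89)%Z, 112%Z), [:: (4, 2, 206%Z, 18%Z, 29900%Z); (2, 3, 103%Z, 206%Z, 59225%Z); (4, 2, 273%Z, 169%Z, 29900%Z); (3, 0, 143%Z, 151%Z, 54442%Z)]);
 ((78%Z, 50%Z), (86%Z, (-69)%Z, 54%Z, (-47)%Z), [:: (6, 2, 57%Z, 105%Z, 6537%Z); (7, 1, 68%Z, 107%Z, 5853%Z); (2, 7, 31%Z, 40%Z, 6047%Z); (1, 6, 41%Z, 35%Z, 6463%Z)]);
 (((-19)%Z, 105%Z), (13%Z, 51%Z, 118%Z, (-83)%Z), [:: (5, 3, 65%Z, 18%Z, 11291%Z); (6, 0, 111%Z, 139%Z, 29375%Z); (3, 6, 187%Z, 17%Z, 14518%Z); (0, 5, 169%Z, 62%Z, 19875%Z)]);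
 (((-52)%Z, 10%Z), (6%Z, 95%Z, 32%Z, 4%Z), [:: (5, 3, 107%Z, 18%Z, 17525%Z); (3, 4, 103%Z, 107%Z, 19350%Z); (5, 3, 31%Z, 169%Z, 17525%Z); (4, 0, 23%Z, 151%Z, 18677%Z)])].
Definition cons4 : seq (seq (Z*Z*Z)) := [:: [:: ((-414)%Z, (-137)%Z, (-1486)%Z); (115%Z, (-237)%Z, (-8389)%Z); (184%Z, 611%Z, 246010%Z)]; [:: (89%Z, (-470)%Z, 166371%Z); (183%Z, (-91)%Z, 91723%Z); (65%Z, (-2)%Z, 29456%Z); ((-727)%Z, 575%Z, (-134928)%Z)]; [:: ((-5)%Z, (-91)%Z, 10924%Z); (226%Z, 159%Z, 36098%Z); ((-206)%Z, 205%Z, (-710)%Z)]; [:: ((-2)%Z, (-101)%Z, (-4085)%Z); (1%Z, (-26)%Z, (-635)%Z); (2%Z, 253%Z, 12455%Z); ((-1)%Z, 256%Z, 11750%Z)]; [:: ((-631)%Z, (-353)%Z, 266428%Z); (403%Z, (-40)%Z, (-17260)%Z); (525%Z, 187%Z, 32510%Z); ((-350)%Z, 123%Z, 165315%Z)]].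
Definition M4 : Z := 755%Z.
Definition pd4 : seq pdata := [:: ((419%Z, 252%Z), (462%Z, (-346)%Z, 281%Z, (-203)%Z), [:: (5, 2, 611%Z, 2%Z, 40083%Z); (6, 1, 237%Z, 575%Z, 106174%Z); (2, 6, 727%Z, 184%Z, 549997%Z); (6, 1, 115%Z, 727%Z, 106174%Z)]);
 ((90%Z, 83%Z), (101%Z, (-74)%Z, 92%Z, (-71)%Z), [:: (1, 4, 159%Z, 237%Z, 71847%Z); (5, 1, 237%Z, 205%Z, 25247%Z); (4, 5, 206%Z, 226%Z, 79084%Z); (5, 1, 115%Z, 206%Z, 25247%Z)]);
 ((3%Z, 43%Z), (22%Z, 12%Z, 46%Z, (-40)%Z), [:: (1, 6, 256%Z, 237%Z, 29203%Z); (6, 0, 137%Z, 256%Z, 106121%Z); (1, 6, 1%Z, 115%Z, 29203%Z); (3, 1, 115%Z, 2%Z, 12089%Z)]);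
 (((-72)%Z, 304%Z), ((-20)%Z, 144%Z, 446%Z, (-107)%Z), [:: (4, 5, 187%Z, 40%Z, 96361%Z); (2, 0, 137%Z, 611%Z, 227746%Z); (2, 0, 414%Z, 184%Z, 227746%Z); (0, 4, 403%Z, 414%Z, 71771%Z)]);
 ((171%Z, (-92)%Z), (254%Z, (-86)%Z, (-17)%Z, 134%Z), [:: (4, 5, 159%Z, 91%Z, 19771%Z); (3, 4, 91%Z, 575%Z, 69032%Z); (5, 3, 727%Z, 226%Z, 245543%Z); (4, 5, 226%Z, 5%Z, 19771%Z)]);
 ((317%Z, 42%Z), (455%Z, (-214)%Z, 47%Z, (-35)%Z), [:: (2, 6, 253%Z, 2%Z, 16449%Z); (3, 4, 101%Z, 575%Z, 74577%Z); (6, 7, 1%Z, 2%Z, 765%Z); (4, 5, 1%Z, 2%Z, 153%Z)]);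
 (((-89)%Z, (-358)%Z), ((-75)%Z, 111%Z, (-330)%Z, 375%Z), [:: (5, 3, 575%Z, 40%Z, 202645%Z); (3, 0, 470%Z, 575%Z, 290515%Z); (5, 3, 727%Z, 403%Z, 202645%Z); (3, 0, 89%Z, 727%Z, 290515%Z)]);
 ((88%Z, 42%Z), (134%Z, (-42)%Z, 47%Z, (-37)%Z), [:: (3, 1, 159%Z, 101%Z, 22508%Z); (2, 3, 101%Z, 205%Z, 21216%Z); (1, 6, 1%Z, 226%Z, 58015%Z); (3, 1, 226%Z, 2%Z, 22508%Z)]);
 (((-71)%Z, (-94)%Z), ((-47)%Z, 110%Z, (-51)%Z, 118%Z), [:: (4, 2, 205%Z, 40%Z, 74375%Z); (2, 0, 91%Z, 205%Z, 19771%Z); (4, 2, 206%Z, 403%Z, 74375%Z); (0, 4, 403%Z, 5%Z, 36873%Z)]);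
 (((-102)%Z, 44%Z), ((-38)%Z, 230%Z, 46%Z, (-41)%Z), [:: (5, 3, 256%Z, 40%Z, 103128%Z); (3, 0, 101%Z, 256%Z, 613%Z); (5, 3, 1%Z, 403%Z, 103128%Z); (0, 5, 403%Z, 2%Z, 40783%Z)])].
Definition cons5 : seq (seq (Z*Z*Z)) := [:: [:: ((-138)%Z, (-101)%Z, (-7589)%Z); ((-19)%Z, (-50)%Z, 435%Z); (419%Z, (-40)%Z, 145805%Z); ((-4)%Z, 41%Z, 10103%Z)]; [:: ((-133)%Z, (-407)%Z, 9719%Z); (31%Z, 41%Z, 3175%Z); (10%Z, 71%Z, 562%Z)]; [:: (65%Z, (-64)%Z, (-901)%Z); (175%Z, (-137)%Z, (-4403)%Z); (121%Z, (-57)%Z, 1445%Z); ((-361)%Z, 258%Z, 16795%Z)]; [:: ((-57)%Z, (-29)%Z, 3613%Z); (1%Z, (-3)%Z, (-109)%Z); (279%Z, 2%Z, (-5241)%Z); ((-182)%Z, 107%Z, 36885%Z)]; [:: ((-48)%Z, (-7)%Z, 7287%Z); ((-215)%Z, (-36)%Z, 30563%Z); (773%Z, (-1)%Z, (-84059)%Z); ((-20)%Z, 29%Z, 18835%Z)]].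
Definition M5 : Z := 575%Z.
Definition pd5 : seq pdata := [:: ((120%Z, (-36)%Z), (230%Z, (-54)%Z, 1%Z, 96%Z), [:: (1, 5, 41%Z, 50%Z, 771%Z); (6, 0, 101%Z, 71%Z, 8788%Z); (6, 0, 138%Z, 10%Z, 8788%Z); (1, 5, 31%Z, 19%Z, 771%Z)]);
 ((53%Z, 121%Z), (125%Z, (-3)%Z, 240%Z, (-52)%Z), [:: (6, 7, 258%Z, 57%Z, 10641%Z); (7, 0, 101%Z, 258%Z, 72065%Z); (6, 7, 361%Z, 121%Z, 10641%Z); (0, 5, 175%Z, 138%Z, 36581%Z)]);
 (((-47)%Z, 195%Z), ((-19)%Z, 88%Z, 245%Z, (-101)%Z), [:: (0, 6, 2%Z, 101%Z, 27903%Z); (7, 0, 101%Z, 107%Z, 33148%Z); (6, 3, 4%Z, 279%Z, 11447%Z); (0, 6, 279%Z, 138%Z, 27903%Z)]);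
 (((-111)%Z, 231%Z), ((-108)%Z, 117%Z, 236%Z, (-223)%Z), [:: (6, 3, 41%Z, 1%Z, 31689%Z); (3, 0, 101%Z, 41%Z, 6062%Z); (6, 3, 4%Z, 773%Z, 31689%Z); (0, 6, 773%Z, 138%Z, 78211%Z)]);
 (((-35)%Z, 1%Z), ((-17)%Z, 52%Z, 14%Z, 13%Z), [:: (4, 2, 71%Z, 137%Z, 13795%Z); (6, 0, 407%Z, 258%Z, 181241%Z); (2, 6, 361%Z, 10%Z, 28211%Z); (0, 4, 175%Z, 133%Z, 89446%Z)]);
 (((-68)%Z, 16%Z), ((-59)%Z, 73%Z, 19%Z, (-13)%Z), [:: (4, 2, 71%Z, 3%Z, 101%Z); (2, 3, 29%Z, 71%Z, 3757%Z); (2, 3, 57%Z, 10%Z, 3757%Z); (3, 4, 1%Z, 57%Z, 200%Z)]);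
 (((-128)%Z, 22%Z), ((-108)%Z, 147%Z, 29%Z, (-11)%Z), [:: (5, 2, 71%Z, 1%Z, 54893%Z); (2, 4, 36%Z, 71%Z, 14905%Z); (2, 4, 215%Z, 10%Z, 14905%Z); (0, 5, 773%Z, 133%Z, 314744%Z)]);
 (((-22)%Z, 32%Z), ((-19)%Z, 27%Z, 39%Z, (-27)%Z), [:: (5, 6, 2%Z, 3%Z, 839%Z); (3, 5, 3%Z, 258%Z, 825%Z); (6, 3, 361%Z, 279%Z, 72704%Z); (3, 5, 1%Z, 361%Z, 825%Z)]);
 (((-116)%Z, (-101)%Z), ((-108)%Z, 125%Z, (-87)%Z, 112%Z), [:: (6, 3, 258%Z, 1%Z, 199073%Z); (3, 5, 36%Z, 258%Z, 68466%Z); (6, 3, 361%Z, 773%Z, 199073%Z); (5, 0, 65%Z, 215%Z, 16100%Z)]);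
 (((-115)%Z, 125%Z), ((-108)%Z, 128%Z, 161%Z, (-88)%Z), [:: (6, 3, 107%Z, 1%Z, 82529%Z); (3, 0, 29%Z, 107%Z, 11377%Z); (6, 3, 182%Z, 773%Z, 82529%Z); (0, 6, 773%Z, 57%Z, 22474%Z)])].
Definition Cs := [:: cons0; cons1; cons2; cons3; cons4; cons5].
Definition Ms := [:: M0; M1; M2; M3; M4; M5].
Definition Ps := [:: pd0; pd1; pd2; pd3; pd4; pd5].
Lemma allclass_ok :
  all (fun c => checkclass (nth [::] Cs c) (nth 0%Z Ms c) (nth [::] Ps c) (repbits c)) (iota 0 6).
Proof. vm_compute. reflexivity. Qed.

Lemma code_lt bs : (code bs < expn 2 (size bs))%nat.
Proof.
elim: bs => [|b s IH]; first by [].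
change (b + (code s).*2 < expn 2 (size s).+1)%nat.
rewrite expnS -muln2; case: b => /=; lia.
Qed.

Theorem claim4 (R : realType) (V : finType) (hV : #|V| = 5%N)
  (o : V -> V -> V -> int) (ho : total_3order o) :
  exists K : V -> set (R * R),
    holey K /\
    forall u v w, distinct3 u v w -> family_orient_is (K u) (K v) (K w) (o u v w).
Proof.
have [x0 _] : exists x0 : V, True.
  by move: hV; rewrite cardE; case: (enum V) => [|x _] // _; exists x.
have hsz : size (enum V) = 5%nat by rewrite -cardE.
pose f (n : nat) : V := nth x0 (enum V) n.
pose idx (v : V) : nat := index v (enum V).
have idx_lt v : (idx v < 5)%nat by rewrite -hsz index_mem mem_enum.
have f_idx v : f (idx v) = v by rewrite /f /idx nth_index // mem_enum.
have f_inj a b : (a < 5)%nat -> (b < 5)%nat -> (f a == f b) = (a == b).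
  by move=> ha hb; rewrite /f nth_uniq ?hsz // enum_uniq.
have idx_inj u v : (idx u == idx v) = (u == v).
  apply/eqP/eqP => [h|->] //; by rewrite -(f_idx u) -(f_idx v) h.
pose g (a b c : nat) : int := o (f a) (f b) (f c).
have fdist a b c : (a, b, c) \in trips -> distinct3 (f a) (f b) (f c).
  move/trips_spec => [ha hb hc /and3P[hab hbc hac]].
  by split; rewrite f_inj.
have Hg : forall a b c, (a, b, c) \in trips ->
     (g a b c = 1 \/ g a b c = -1) /\
     [/\ g a b c = g c a b, g a b c = g b c a, g a b c = - g a c b,
         g a b c = - g b a c & g a b c = - g c b a].
  by move=> a b c /fdist h; apply: ho.1.
pose bs := [seq g t.1.1 t.1.2 t.2 == 1 | t <- tri].
have Hext := ext_g Hg.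
have ext1 a b c : (a, b, c) \in trips -> (ext bs a b c == 1) = signb bs a b c.
  by move=> _; rewrite /ext; case: (signb bs a b c).
have Hvalid : validb bs.
  apply/allP => -[[[a b] c] d] /quads_spec [habc habd hbcd hcad].
  rewrite -!ext1 // -!Hext //; apply/implyP => /andP[/andP[/eqP h1 /eqP h2] /eqP h3].
  apply/eqP; apply: (ho.2 (f a) (f b) (f c) (f d)) => //.
  - exact: fdist.
  - by have [_ _ []] := fdist _ _ _ habd.
  - by have [_ _ []] := fdist _ _ _ hbcd.
  - by have [_ _ []] := fdist _ _ _ hcad.
have Hbs : size bs = 10%nat by rewrite size_map.
have hlt1 : (code bs < 1024)%nat by have := code_lt bs; rewrite Hbs.
have hb10 : bits 10 (code bs) = bs by rewrite -{1}Hbs bits_code.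
have := bigcheck_ok; move/allP/(_ (code bs)).
rewrite mem_iota add0n hlt1 hb10 Hvalid.
move=> /(_ isT).
case: (nth (0%nat, [::]) table (code bs)) => c sg.
case/and5P => hc /eqP hsg hu /allP hlt /allP hm.
have Hcl : checkclass (nth [::] Cs c) (nth 0%Z Ms c) (nth [::] Ps c) (repbits c).
  by move/allP: allclass_ok; apply; rewrite mem_iota.
pose s (v : V) : nat := nth 0%nat sg (idx v).
have s_lt v : (s v < 5)%nat by apply: hlt; rewrite mem_nth // hsg.
have s_inj u v : (s u == s v) = (u == v).
  by rewrite /s nth_uniq ?hsg // idx_inj.
pose K (v : V) : set (R * R) := @Kset R (nth [::] (nth [::] Cs c) (s v)) (nth 0%Z Ms c).
have tr u v w : distinct3 u v w -> (s u, s v, s w) \in trips.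
  by case=> huv hvw huw; apply: trips_mem; rewrite ?s_inj.
have tri_idx u v w : distinct3 u v w -> (idx u, idx v, idx w) \in trips.
  by case=> huv hvw huw; apply: trips_mem; rewrite ?idx_inj.
exists K; split.
  split.
  - by move=> v; split; [apply: Kset_compact | apply: Kset_convex].
  - move=> u v huv.
    have hneq : s u != s v by rewrite s_inj.
    by have [] := class_pair R Hcl (s_lt u) (s_lt v) hneq.
  - by move=> u v w /tr h; have [] := class_tri R Hcl h.
move=> u v w huvw.
have [_ ho'] := class_tri R Hcl (tr _ _ _ huvw).
have -> : o u v w = g (idx u) (idx v) (idx w) by rewrite /g !f_idx.
rewrite Hext; last exact: tri_idx.
have := hm _ (tri_idx _ _ _ huvw) => /= /eqP hsig.
by rewrite /ext hsig.
Qed.
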